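(* Let $(\Gamma,c)$ be a real congruence group and let $\gamma\in\Gamma$ be admissible. Then $C_\gamma$ contains two cusps of $\Gamma$, and $C_\gamma$ is homeomorphic to a closed interval.
   Context: $\mathfrak{h}$ is the upper half-plane. A complex conjugation is an anti-holomorphic involution $c$ of $\mathfrak{h}$; it extends to $\mathfrak{h}\cup\mathbf{R}\mathbf{P}^1$. For $\gamma\in\mathrm{PSL}_2(\mathbf{R})$, $\gamma^c=c\gamma c$. A real congruence group is a pair $(\Gamma,c)$ with $\Gamma\subseteq\mathrm{PSL}_2(\mathbf{Z})$, $c$ a complex conjugation with $\Gamma^c=\Gamma$, and such that for some $N\ge1$, $\Gamma$ contains $\Gamma(N)$ (image of matrices $\equiv I\bmod N$) and $\Gamma(N)^c=\Gamma(N)$. The cusps of $\Gamma$ are the points of $\mathbf{Q}\mathbf{P}^1$, and $\mathfrak{h}^*=\mathfrak{h}\cup\mathbf{Q}\mathbf{P}^1$. An element $\gamma\in\Gamma$ is admissible if $\gamma^c=\gamma^{-1}$, and $C_\gamma=\{z\in\mathfrak{h}^*:\gamma z=cz\}$. *)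

(* Defs.v *)
From Stdlib Require Import Reals ZArith.
From Coquelicot Require Import Coquelicot.
Open Scope R_scope.

Record rmat := RMat { ra : R; rb : R; rc : R; rd : R }.
Record zmat := ZMat { za : Z; zb : Z; zc : Z; zd : Z }.

Definition rdet (m : rmat) : R := ra m * rd m - rb m * rc m.
Definition zdet (m : zmat) : Z := (za m * zd m - zb m * zc m)%Z.
Definition zmul (m n : zmat) : zmat :=
  ZMat (za m * za n + zb m * zc n) (za m * zb n + zb m * zd n)
       (zc m * za n + zd m * zc n) (zc m * zb n + zd m * zd n).
Definition zinv (m : zmat) : zmat := ZMat (zd m) (- zb m) (- zc m) (za m).
Definition zneg (m : zmat) : zmat := ZMat (- za m) (- zb m) (- zc m) (- zd m).
Definition zid : zmat := ZMat 1 0 0 1.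
Definition rmat_of_z (m : zmat) : rmat :=
  RMat (IZR (za m)) (IZR (zb m)) (IZR (zc m)) (IZR (zd m)).

(* ---------- points of P^1(C): None is the point at infinity ---------- *)
Definition pt := option C.

Definition in_h (z : C) : Prop := 0 < Im z.
Definition is_rat (x : R) : Prop :=
  exists p q : Z, q <> 0%Z /\ x = IZR p / IZR q.
Definition is_cusp (p : pt) : Prop :=
  match p with
  | None => True
  | Some z => Im z = 0 /\ is_rat (Re z)
  end.
Definition in_hstar (p : pt) : Prop :=
  is_cusp p \/ exists z, p = Some z /\ in_h z.

Definition mob (m : rmat) (p : pt) : pt :=
  match p with
  | None => if Req_EM_T (rc m) 0 then None else Some (RtoC (ra m / rc m))
  | Some z =>
      if Req_EM_T (rc m * Re z + rd m) 0 then
        if Req_EM_T (rc m * Im z) 0 then None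
        else Some ((RtoC (ra m) * z + RtoC (rb m)) / (RtoC (rc m) * z + RtoC (rd m)))%C
      else Some ((RtoC (ra m) * z + RtoC (rb m)) / (RtoC (rc m) * z + RtoC (rd m)))%C
  end.

Definition pconj (p : pt) : pt :=
  match p with None => None | Some z => Some (Cconj z) end.

Definition cmob (J : rmat) (p : pt) : pt := mob J (pconj p).

Definition is_complex_conjugation (J : rmat) : Prop :=
  rdet J < 0 /\ forall z, in_h z -> cmob J (cmob J (Some z)) = Some z.

(* gamma^c = c gamma c equals gamma' in PSL_2(R) (elements of PSL_2(R)
   compared through their faithful action on h) *)
Definition conj_is (J M M' : rmat) : Prop :=
  forall z, in_h z -> cmob J (mob M (cmob J (Some z))) = mob M' (Some z).

(* A subgroup of PSL_2(Z), represented by its (sign-closed) preimage in SL_2(Z) *)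
Definition is_subgroup_PSL2Z (G : zmat -> Prop) : Prop :=
  (forall m, G m -> zdet m = 1%Z) /\
  (forall m, G m -> G (zneg m)) /\
  G zid /\
  (forall m n, G m -> G n -> G (zmul m n)) /\
  (forall m, G m -> G (zinv m)).

Definition zmat_eq_mod (N : Z) (m n : zmat) : Prop :=
  (N | za m - za n)%Z /\ (N | zb m - zb n)%Z /\
  (N | zc m - zc n)%Z /\ (N | zd m - zd n)%Z.

(* Gamma(N): image in PSL_2(Z) of the matrices = I mod N *)
Definition in_GammaN (N : Z) (m : zmat) : Prop :=
  zdet m = 1%Z /\ (zmat_eq_mod N m zid \/ zmat_eq_mod N (zneg m) zid).

Definition conj_stable (J : rmat) (H : zmat -> Prop) : Prop :=
  (forall m, H m -> exists m', H m' /\ conj_is J (rmat_of_z m) (rmat_of_z m')) /\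
  (forall m', H m' -> exists m, H m /\ conj_is J (rmat_of_z m) (rmat_of_z m')).

Definition real_congruence_group (G : zmat -> Prop) (J : rmat) : Prop :=
  is_subgroup_PSL2Z G /\ is_complex_conjugation J /\ conj_stable J G /\
  exists N : Z, (1 <= N)%Z /\
    (forall m, in_GammaN N m -> G m) /\ conj_stable J (in_GammaN N).

Definition admissible (J : rmat) (m : zmat) : Prop :=
  conj_is J (rmat_of_z m) (rmat_of_z (zinv m)).

Definition C_gamma (J : rmat) (m : zmat) (p : pt) : Prop :=
  in_hstar p /\ mob (rmat_of_z m) p = cmob J p.

(* ---------- topology of h^star (horocycle / Satake topology) ---------- *)
Definition hnbhs (p : pt) (U : pt -> Prop) : Prop :=
  match p with
  | None => exists C0, 0 < C0 /\ U None /\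
              forall w, C0 < Im w -> U (Some w)
  | Some z =>
      if Rlt_dec 0 (Im z) then
        exists r, 0 < r /\ r <= Im z /\
          forall w, Cmod (w - z)%C < r -> U (Some w)
      else
        exists r, 0 < r /\ U (Some z) /\
          forall w, 0 < Im w -> Cmod (w - (Re z, r))%C < r -> U (Some w)
  end.

Definition in_unit_interval (t : R) : Prop := 0 <= t <= 1.

Definition homeomorphic_to_interval (S : pt -> Prop) : Prop :=
  exists (f : R -> pt) (g : pt -> R),
    (forall t, in_unit_interval t -> S (f t)) /\
    (forall p, S p -> in_unit_interval (g p)) /\
    (forall t, in_unit_interval t -> g (f t) = t) /\
    (forall p, S p -> f (g p) = p) /\
    (forall t, in_unit_interval t -> forall U, hnbhs (f t) U ->
       exists d, 0 < d /\ forall s, in_unit_interval s -> Rabs (s - t) < d -> U (f s)) /\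
    (forall p, S p -> forall e, 0 < e ->
       exists U, hnbhs p U /\ forall q, S q -> U q -> Rabs (g q - g p) < e).

(* Main.v *)
Require Import Defs.
From Stdlib Require Import Reals ZArith.
From Coquelicot Require Import Coquelicot.
From Stdlib Require Import Lra Psatz Znumtheory Lia.
Open Scope R_scope.
Open Scope R_scope.

Definition den (M : rmat) (z : C) : C := (RtoC (rc M) * z + RtoC (rd M))%C.
Definition mz (M : rmat) (z : C) : C :=
  ((RtoC (ra M) * z + RtoC (rb M)) / den M z)%C.
Definition rmul (A B : rmat) : rmat :=
  RMat (ra A*ra B + rb A*rc B) (ra A*rb B + rb A*rd B)
       (rc A*ra B + rd A*rc B) (rc A*rb B + rd A*rd B).

Lemma den_re M z : Re (den M z) = rc M * Re z + rd M.
Proof. destruct z; unfold den, RtoC; simpl; ring. Qed.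
Lemma den_im M z : Im (den M z) = rc M * Im z.
Proof. destruct z; unfold den, RtoC; simpl; ring. Qed.

Lemma C_neq0 (z : C) : Re z <> 0 \/ Im z <> 0 -> z <> 0%C.
Proof. destruct z as [x y]; simpl; intros [H|H] E; inversion E; auto. Qed.

Lemma C_eq0 (z : C) : z <> 0%C -> Re z <> 0 \/ Im z <> 0.
Proof. destruct z as [x y]; simpl; intros H.
 destruct (Req_dec x 0); destruct (Req_dec y 0); subst; auto. Qed.

Lemma sumsq0 u v : u * u + v * v = 0 -> u = 0 /\ v = 0.
Proof. intros H. split; nra. Qed.
Lemma sumsq_nz u v : u <> 0 \/ v <> 0 -> u * u + v * v <> 0.
Proof. intros H E. apply sumsq0 in E. tauto. Qed.

Lemma mob_some M z : den M z <> 0%C -> mob M (Some z) = Some (mz M z).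
Proof.
  intros H. unfold mob. rewrite <- den_re, <- den_im.
  destruct (Req_EM_T (Re (den M z)) 0); [|reflexivity].
  destruct (Req_EM_T (Im (den M z)) 0); [|reflexivity].
  exfalso; apply H; destruct (den M z); simpl in *; subst; reflexivity.
Qed.

Lemma mob_none M z : den M z = 0%C -> mob M (Some z) = None.
Proof.
  intros H. unfold mob. rewrite <- den_re, <- den_im, H. simpl.
  destruct (Req_EM_T 0 0); [|congruence].
  destruct (Req_EM_T 0 0); [|congruence]. reflexivity.
Qed.

Lemma den_nz M z : rdet M <> 0 -> Im z <> 0 -> den M z <> 0%C.
Proof.
  intros Hd Hz. apply C_neq0. rewrite den_re, den_im.
  unfold rdet in Hd.
  destruct (Req_dec (rc M) 0) as [E|E].
  - left. rewrite E in *. intro. apply Hd. nra.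
  - right. intro. apply Rmult_integral in H. tauto.
Qed.

Lemma Im_mz M z : den M z <> 0%C ->
  Im (mz M z) = rdet M * Im z / ((rc M * Re z + rd M)^2 + (rc M * Im z)^2).
Proof.
  intros H. apply C_eq0 in H. rewrite den_re, den_im in H.
  unfold mz, den, rdet, Cdiv, RtoC, Cmult, Cplus, Cinv, Im, Re in *; destruct z as [x y]; destruct M; simpl in *.
  field. apply sumsq_nz; exact H.
Qed.

Lemma Re_mz M z : den M z <> 0%C ->
  Re (mz M z) = ((ra M * Re z + rb M) * (rc M * Re z + rd M) + ra M * rc M * Im z ^2)
    / ((rc M * Re z + rd M)^2 + (rc M * Im z)^2).
Proof.
  intros H. apply C_eq0 in H. rewrite den_re, den_im in H.
  unfold mz, den, rdet, Cdiv, RtoC, Cmult, Cplus, Cinv, Im, Re in *; destruct z as [x y]; destruct M; simpl in *.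
  field. apply sumsq_nz; exact H.
Qed.

Lemma den_mul A B z : den B z <> 0%C ->
  den (rmul A B) z = (den A (mz B z) * den B z)%C.
Proof. intros H. unfold mz in *. unfold den in *; destruct A, B; simpl in *.
  rewrite !RtoC_plus, !RtoC_mult. field. exact H. Qed.

Lemma mz_mul A B z : den B z <> 0%C -> den A (mz B z) <> 0%C ->
  mz A (mz B z) = mz (rmul A B) z.
Proof. intros H1 H2. unfold mz at 1 3. rewrite den_mul by exact H1.
  unfold mz in *. unfold den in *; destruct A, B; simpl in *.
  rewrite !RtoC_plus, !RtoC_mult. field. split; [auto|].
  intro E. apply H2.
  assert (Ee : (rc * ((ra0 * z + rb0) / (rc0 * z + rd0)) + rd =
     (rc * (ra0 * z + rb0) + rd * (rc0 * z + rd0)) / (rc0 * z + rd0))%C) by (field; auto).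
  rewrite Ee, E. unfold Cdiv. apply Cmult_0_l. Qed.

Lemma conj_mz M z : den M z <> 0%C -> Cconj (mz M z) = mz M (Cconj z).
Proof. intros H. apply C_eq0 in H. rewrite den_re, den_im in H.
  unfold mz, den, Cdiv, Cconj, RtoC, Cmult, Cplus, Cinv, Im, Re in *; destruct z as [x y]; destruct M; simpl in *.
  f_equal; field; apply sumsq_nz; destruct H as [H|H]; solve [left; exact H| right; intro E; apply H; lra]. Qed.
Open Scope R_scope.
Open Scope R_scope.

Lemma Im_mz_nz M z : rdet M <> 0 -> Im z <> 0 -> Im (mz M z) <> 0.
Proof. intros H1 H2. pose proof (den_nz M z H1 H2) as Hd. rewrite Im_mz by auto.
  pose proof Hd as Hd'. apply C_eq0 in Hd'. rewrite den_re, den_im in Hd'.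
  assert (0 < (rc M * Re z + rd M) ^ 2 + (rc M * Im z) ^ 2).
  { destruct Hd' as [h|h]; [pose proof (pow2_gt_0 _ h)| pose proof (pow2_gt_0 _ h)];
    pose proof (pow2_ge_0 (rc M * Re z + rd M)); pose proof (pow2_ge_0 (rc M * Im z)); lra. }
  unfold Rdiv. intro E. apply Rmult_integral in E. destruct E as [E|E].
  - apply Rmult_integral in E; tauto.
  - apply Rinv_neq_0_compat in E; lra. Qed.

Lemma Some_inj {A} (a b : A) : Some a = Some b -> a = b.
Proof. intros H; injection H; auto. Qed.

Lemma Im_conj z : Im (Cconj z) = - Im z.
Proof. destruct z; reflexivity. Qed.
Lemma Cconj_inv z : Cconj (Cconj z) = z.
Proof. destruct z; unfold Cconj; simpl; f_equal; ring. Qed.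

Lemma rdet_mul A B : rdet (rmul A B) = rdet A * rdet B.
Proof. unfold rdet, rmul; simpl; ring. Qed.

Lemma conj_is_mz J M M' : rdet J <> 0 -> rdet M <> 0 -> rdet M' <> 0 -> conj_is J M M' ->
  forall z, 0 < Im z -> mz (rmul (rmul J M) J) z = mz M' z.
Proof.
  intros HJ HM HM' H z Hz. specialize (H z Hz).
  assert (Hz' : Im z <> 0) by lra.
  unfold cmob in H. change (pconj (Some z)) with (Some (Cconj z)) in H. rewrite (mob_some J) in H by (apply den_nz; auto; rewrite Im_conj; lra).
  rewrite (mob_some M) in H by (apply den_nz; auto; apply Im_mz_nz; auto; rewrite Im_conj; lra).
  change (pconj (Some (mz M (mz J (Cconj z))))) with (Some (Cconj (mz M (mz J (Cconj z))))) in H.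
  rewrite mob_some in H by (apply den_nz; auto; rewrite Im_conj; apply Ropp_neq_0_compat;
     apply Im_mz_nz; auto; apply Im_mz_nz; auto; rewrite Im_conj; lra).
  rewrite mob_some in H by (apply den_nz; auto).
  apply Some_inj in H. rewrite <- H.
  rewrite conj_mz by (apply den_nz; auto; apply Im_mz_nz; auto; rewrite Im_conj; lra).
  rewrite conj_mz by (apply den_nz; auto; rewrite Im_conj; lra).
  rewrite Cconj_inv.
  assert (Hm : forall A B, rdet A <> 0 -> rdet B <> 0 -> rdet (rmul A B) <> 0).
  { intros A B HA HB. rewrite rdet_mul. apply Rmult_integral_contrapositive; auto. }
  rewrite mz_mul, mz_mul; try reflexivity;
  repeat (apply den_nz || apply Im_mz_nz || apply Hm || assumption).
Qed.

Definition rel3 (X Y : rmat) : Prop :=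
  ra X * rc Y = ra Y * rc X /\
  ra X * rd Y + rb X * rc Y = ra Y * rd X + rb Y * rc X /\
  rb X * rd Y = rb Y * rd X.

Lemma cross_at X Y y : y <> 0 -> rdet X <> 0 -> rdet Y <> 0 -> mz X (0,y) = mz Y (0,y) ->
  rb X * rd Y - ra X * rc Y * y^2 = rb Y * rd X - ra Y * rc X * y^2 /\
  rb X * rc Y + ra X * rd Y = rb Y * rc X + ra Y * rd X.
Proof. intros Hy HX HY E.
  pose proof (den_nz X (0,y) HX Hy) as DX. pose proof (den_nz Y (0,y) HY Hy) as DY.
  unfold mz in E.
  assert (E2 : ((RtoC (ra X) * (0,y) + RtoC (rb X)) * den Y (0,y) =
     (RtoC (ra Y) * (0,y) + RtoC (rb Y)) * den X (0,y))%C).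
  { replace (RtoC (ra X) * (0,y) + RtoC (rb X))%C with
     ((RtoC (ra X) * (0,y) + RtoC (rb X)) / den X (0,y) * den X (0,y))%C by (field; auto).
    rewrite E. field. auto. }
  unfold den, RtoC, Cmult, Cplus in E2; simpl in E2. injection E2 as E3 E4.
  split.
  - nra.
  - apply (Rmult_eq_reg_l y); [|auto]. nra.
Qed.

Lemma rel_of_mz X Y : rdet X <> 0 -> rdet Y <> 0 ->
  (forall z, 0 < Im z -> mz X z = mz Y z) -> rel3 X Y.
Proof. intros HX HY H.
  assert (Q1 : mz X (0,1) = mz Y (0,1)) by (apply H; simpl; lra).
  assert (Q2 : mz X (0,2) = mz Y (0,2)) by (apply H; simpl; lra).
  destruct (cross_at X Y 1) as [A1 A2]; auto; try lra.
  destruct (cross_at X Y 2) as [B1 B2]; auto; try lra.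
  unfold rel3. split; [|split]; nra.
Qed.

Lemma rel_prop X Y : rel3 X Y -> rdet Y = 1 ->
  let w := ra X * rd Y - rc X * rb Y in
  ra X = w * ra Y /\ rb X = w * rb Y /\ rc X = w * rc Y /\ rd X = w * rd Y.
Proof. unfold rel3, rdet; destruct X as [x1 x2 x3 x4], Y as [y1 y2 y3 y4]; simpl.
  intros [R1 [R2 R3]] D.
  pose proof (f_equal (Rmult y1) R1). pose proof (f_equal (Rmult y2) R1).
  pose proof (f_equal (Rmult y3) R1). pose proof (f_equal (Rmult y4) R1).
  pose proof (f_equal (Rmult y1) R2). pose proof (f_equal (Rmult y2) R2).
  pose proof (f_equal (Rmult y3) R2). pose proof (f_equal (Rmult y4) R2).
  pose proof (f_equal (Rmult y1) R3). pose proof (f_equal (Rmult y2) R3).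
  pose proof (f_equal (Rmult y3) R3). pose proof (f_equal (Rmult y4) R3).
  pose proof (f_equal (Rmult x1) D). pose proof (f_equal (Rmult x2) D).
  pose proof (f_equal (Rmult x3) D). pose proof (f_equal (Rmult x4) D).
  split; [|split; [|split]]; lra. Qed.
Open Scope R_scope.
Open Scope Z_scope.

Lemma gcd_sq a b : Z.gcd a b = 1 -> Z.gcd a (b*b) = 1.
Proof. intros H. apply Zgcd_1_rel_prime. apply rel_prime_mult; apply Zgcd_1_rel_prime; auto. Qed.

Lemma gcd_divides_1 a b d : Z.gcd a b = 1 -> (d | a) -> (d | b) -> d = 1 \/ d = -1.
Proof. intros H Ha Hb. assert (d | 1) by (rewrite <- H; apply Z.gcd_greatest; auto).
  destruct (Z.divide_1_r _ H0); auto. Qed.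

Lemma split_gcd a b : 0 < Z.gcd a b ->
  exists a' b', a = a' * Z.gcd a b /\ b = b' * Z.gcd a b /\ Z.gcd a' b' = 1.
Proof. intros Hg.
  destruct (Z.gcd_divide_l a b) as [a' Ha]. destruct (Z.gcd_divide_r a b) as [b' Hb].
  exists a', b'. split; [auto|split; [auto|]].
  pose proof (Z.gcd_mul_mono_r a' b' (Z.gcd a b)) as E.
  rewrite <- Ha, <- Hb, Z.abs_eq in E by lia.
  assert (Z.gcd a' b' * Z.gcd a b = 1 * Z.gcd a b) by lia.
  apply Z.mul_cancel_r in H; lia. Qed.

Lemma ZL1 N k : 0 < N -> (N*N | k*k) -> (N | k).
Proof. intros HN Hd.
  assert (Hg : 0 < Z.gcd N k).
  { pose proof (Z.gcd_nonneg N k). destruct (Z.eq_dec (Z.gcd N k) 0) as [E|E]; [|lia].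
    apply Z.gcd_eq_0 in E; lia. }
  destruct (split_gcd N k Hg) as (N' & k' & EN & Ek & G).
  set (g := Z.gcd N k) in *.
  assert (Hd' : (N' * N' | k' * k')).
  { apply (Z.mul_divide_cancel_r _ _ (g*g)); [lia|].
    replace (N' * N' * (g * g)) with (N*N) by (rewrite EN; ring).
    replace (k' * k' * (g * g)) with (k*k) by (rewrite Ek; ring). auto. }
  assert (H1 : (N' | k')).
  { apply (Z.gauss _ k'); [|auto]. eapply Z.divide_trans; [|exact Hd'].
    apply Z.divide_factor_l. }
  destruct (gcd_divides_1 N' k' N' G (Z.divide_refl _) H1) as [E|E];
  rewrite EN, Ek, E; [exists k'; ring | exists (-k'); ring].
Qed.

Lemma ZL2 n m u : 0 < n -> Z.gcd n m = 1 -> n * m = u * u -> exists g, n = g * g.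
Proof. intros Hn G E.
  assert (Hg : 0 < Z.gcd n u).
  { pose proof (Z.gcd_nonneg n u). destruct (Z.eq_dec (Z.gcd n u) 0) as [E'|E']; [|lia].
    apply Z.gcd_eq_0 in E'; lia. }
  destruct (split_gcd n u Hg) as (n' & u' & En & Eu & G').
  set (g := Z.gcd n u) in *.
  assert (E2 : g * (u' * u') = n' * m).
  { apply (Z.mul_cancel_l _ _ g); [lia|].
    transitivity (u*u); [rewrite Eu; ring|]. rewrite <- E, En; ring. }
  assert (D1 : (n' | g)).
  { apply (Z.gauss _ (u'*u')). rewrite Z.mul_comm, E2. apply Z.divide_factor_l.
    apply gcd_sq; auto. }
  assert (Gm : Z.gcd g m = 1).
  { destruct (gcd_divides_1 n m (Z.gcd g m) G).
    - eapply Z.divide_trans; [apply Z.gcd_divide_l|]. exists n'. auto.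
    - apply Z.gcd_divide_r.
    - auto.
    - pose proof (Z.gcd_nonneg g m); lia. }
  assert (D2 : (g | n')).
  { apply (Z.gauss _ m); [|auto]. rewrite Z.mul_comm, <- E2. apply Z.divide_factor_l. }
  assert (n' > 0 \/ n' <= 0) as [Hp|Hp] by lia.
  - exists g. rewrite En. f_equal. apply Z.divide_antisym_nonneg; auto; lia.
  - exfalso. rewrite En in Hn. nia.
Qed.
Open Scope R_scope.
Open Scope R_scope.

Lemma is_rat_IZR k : is_rat (IZR k).
Proof. exists k, 1%Z. split; [lia|]. simpl. field. Qed.
Lemma is_rat_plus x y : is_rat x -> is_rat y -> is_rat (x + y).
Proof. intros [p [q [Hq E]]] [p' [q' [Hq' E']]]. exists (p*q' + p'*q)%Z, (q*q')%Z.
  split; [lia|]. subst. rewrite plus_IZR, !mult_IZR. field.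
  split; apply not_0_IZR; auto. Qed.
Lemma is_rat_mult x y : is_rat x -> is_rat y -> is_rat (x * y).
Proof. intros [p [q [Hq E]]] [p' [q' [Hq' E']]]. exists (p*p')%Z, (q*q')%Z.
  split; [lia|]. subst. rewrite !mult_IZR. field.
  split; apply not_0_IZR; auto. Qed.
Lemma is_rat_opp x : is_rat x -> is_rat (- x).
Proof. intros [p [q [Hq E]]]. exists (-p)%Z, q. split; auto. subst. rewrite opp_IZR. field.
  apply not_0_IZR; auto. Qed.
Lemma is_rat_minus x y : is_rat x -> is_rat y -> is_rat (x - y).
Proof. intros. unfold Rminus. apply is_rat_plus; auto. apply is_rat_opp; auto. Qed.
Lemma is_rat_inv x : is_rat x -> x <> 0 -> is_rat (/ x).
Proof. intros [p [q [Hq E]]] Hx. assert (p <> 0%Z) by (intro; subst; apply Hx; simpl; field; apply not_0_IZR; auto).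
  exists q, p. split; auto. subst. field. split; apply not_0_IZR; auto. Qed.
Lemma is_rat_div x y : is_rat x -> is_rat y -> y <> 0 -> is_rat (x / y).
Proof. intros. apply is_rat_mult; auto. apply is_rat_inv; auto. Qed.

Lemma sq_pm (x y : R) : x * x = y * y -> x = y \/ x = - y.
Proof. intros H. assert ((x - y) * (x + y) = 0) by nra.
  apply Rmult_integral in H0. destruct H0; [left|right]; lra. Qed.

Lemma rationalize (a b c D : R) (N n m l u0 v0 : Z) :
  D = a*a + b*c -> 0 < D -> (0 < N)%Z ->
  a*a = D * IZR n -> b*b = D * IZR m -> c*c = D * IZR l ->
  IZR N * (a*b) = D * IZR u0 -> IZR N * (a*c) = D * IZR v0 ->
  exists A B C, is_rat A /\ is_rat B /\ is_rat C /\
    a = sqrt D * A /\ b = sqrt D * B /\ c = sqrt D * C.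
Proof.
  intros HD Dpos HN Hn Hm Hl Hu Hv.
  set (s := sqrt D).
  assert (Hs : 0 < s) by (apply sqrt_lt_R0; auto).
  assert (Hss : s * s = D) by (apply sqrt_sqrt; lra).
  assert (Hm0 : (0 <= m)%Z).
  { apply le_IZR. apply (Rmult_le_reg_l D); auto. change (IZR 0) with 0. rewrite Rmult_0_r, <- Hm. nra. }
  assert (Hl0 : (0 <= l)%Z).
  { apply le_IZR. apply (Rmult_le_reg_l D); auto. change (IZR 0) with 0. rewrite Rmult_0_r, <- Hl. nra. }
  assert (Hn0 : (0 <= n)%Z).
  { apply le_IZR. apply (Rmult_le_reg_l D); auto. change (IZR 0) with 0. rewrite Rmult_0_r, <- Hn. nra. }
  assert (Eml : (m * l = (1 - n) * (1 - n))%Z).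
  { apply eq_IZR. rewrite !mult_IZR, minus_IZR.
    apply (Rmult_eq_reg_l (D*D)); [|nra].
    transitivity ((b*b)*(c*c)); [rewrite Hm, Hl; ring|].
    replace (b*c) with (D - a*a) by lra.
    replace (b * b * (c * c)) with ((b*c)*(b*c)) by ring.
    replace (b*c) with (D - a*a) by lra. rewrite Hn. simpl. ring. }
  destruct (Req_dec a 0) as [Ha|Ha].
  - assert (n = 0%Z) by (apply eq_IZR; apply (Rmult_eq_reg_l D); [|lra]; rewrite <- Hn, Ha; ring).
    subst n. assert (m = 1%Z /\ l = 1%Z) as [-> ->] by (apply Z.eq_mul_1_nonneg; auto; rewrite Eml; ring).
    exists 0, (b / s), (c / s).
    assert (HB : (b/s)*(b/s) = 1).
    { unfold Rdiv. replace (b * / s * (b * / s)) with ((b*b) / (s*s)) by (field; lra).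
      rewrite Hm, Hss. simpl. field. lra. }
    assert (HC : (c/s)*(c/s) = 1).
    { unfold Rdiv. replace (c * / s * (c * / s)) with ((c*c) / (s*s)) by (field; lra).
      rewrite Hl, Hss. simpl. field. lra. }
    split; [apply (is_rat_IZR 0)|]. split.
    { destruct (sq_pm (b/s) 1) as [E|E]; [lra|rewrite E; apply (is_rat_IZR 1)|rewrite E; apply (is_rat_IZR (-1))]. }
    split.
    { destruct (sq_pm (c/s) 1) as [E|E]; [lra|rewrite E; apply (is_rat_IZR 1)|rewrite E; apply (is_rat_IZR (-1))]. }
    split; [rewrite Ha; ring|]. split; field; lra.
  - assert (Hnp : (0 < n)%Z).
    { apply lt_IZR. apply (Rmult_lt_reg_l D); auto. change (IZR 0) with 0. rewrite Rmult_0_r, <- Hn.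
      pose proof (pow2_gt_0 a Ha). simpl in H. lra. }
    assert (E1 : (N*N*(n*m) = u0*u0)%Z).
    { apply eq_IZR. rewrite !mult_IZR. apply (Rmult_eq_reg_l (D*D)); [|nra].
      transitivity ((IZR N * (a*b)) * (IZR N * (a*b))); [|rewrite Hu; ring].
      transitivity (IZR N * IZR N * ((a*a)*(b*b))); [rewrite Hn, Hm; ring|ring]. }
    assert (Hdiv : (N | u0)%Z).
    { apply ZL1; auto. exists (n*m)%Z. lia. }
    destruct Hdiv as [k Hk].
    assert (E2 : (n * m = k * k)%Z).
    { apply (Z.mul_cancel_l _ _ (N*N)); [nia|]. rewrite E1, Hk. ring. }
    assert (G : Z.gcd n m = 1%Z).
    { destruct (gcd_divides_1 n 1 (Z.gcd n m)) as [E|E].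
      - apply Z.gcd_1_r.
      - apply Z.gcd_divide_l.
      - assert (Hd1 : (Z.gcd n m | (1 - n) * (1 - n))%Z).
        { rewrite <- Eml. apply Z.divide_mul_l. apply Z.gcd_divide_r. }
        replace 1%Z with ((1 - n) * (1 - n) + n * (2 - n))%Z by ring.
        apply Z.divide_add_r; auto. apply Z.divide_mul_l. apply Z.gcd_divide_l.
      - auto.
      - pose proof (Z.gcd_nonneg n m). lia. }
    destruct (ZL2 n m k Hnp G E2) as [g Hg].
    set (A := a / s).
    assert (HA : A * A = IZR g * IZR g).
    { unfold A, Rdiv. replace (a * / s * (a * / s)) with ((a*a) / (s*s)) by (field; lra).
      rewrite Hn, Hss, Hg, mult_IZR. field. lra. }
    assert (RA : is_rat A).
    { destruct (sq_pm _ _ HA) as [E|E]; rewrite E; [apply is_rat_IZR|apply is_rat_opp, is_rat_IZR]. }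
    assert (Anz : A <> 0) by (unfold A; intro E; apply Ha; apply (Rmult_eq_reg_r (/s));
       [rewrite Rmult_0_l; exact E| apply Rinv_neq_0_compat; lra]).
    assert (HNr : IZR N <> 0) by (apply not_0_IZR; lia).
    exists A, (IZR u0 / IZR N / A), (IZR v0 / IZR N / A).
    split; [auto|]. split.
    { apply is_rat_div; auto. apply is_rat_div; auto; apply is_rat_IZR. }
    split.
    { apply is_rat_div; auto. apply is_rat_div; auto; apply is_rat_IZR. }
    unfold A. split; [field; lra|]. split.
    + apply (Rmult_eq_reg_l (IZR N * a)); [|apply Rmult_integral_contrapositive; auto].
      transitivity (D * IZR u0); [rewrite <- Hu; ring|]. rewrite <- Hss. field. lra.
    + apply (Rmult_eq_reg_l (IZR N * a)); [|apply Rmult_integral_contrapositive; auto].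
      transitivity (D * IZR v0); [rewrite <- Hv; ring|]. rewrite <- Hss. field. lra.
Qed.
Open Scope R_scope.
Open Scope R_scope.

Definition Iden := RMat 1 0 0 1.

Lemma mob_Iden w : mob Iden (Some w) = Some w.
Proof. rewrite mob_some.
  - f_equal. unfold mz, den, Iden; simpl. field.
  - unfold den, Iden; simpl. intro E. 
    assert (E' : (RtoC 0 * w + RtoC 1 = RtoC 1)%C) by ring. rewrite E' in E.
    injection E; lra.
Qed.

Lemma rdet_z m : rdet (rmat_of_z m) = IZR (zdet m).
Proof. unfold rdet, zdet, rmat_of_z; simpl. rewrite minus_IZR, !mult_IZR. ring. Qed.

Lemma cmob_some J z : rdet J <> 0 -> Im z <> 0 -> cmob J (Some z) = Some (mz J (Cconj z)).
Proof. intros. unfold cmob. change (pconj (Some z)) with (Some (Cconj z)).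
  apply mob_some. apply den_nz; auto. rewrite Im_conj; lra. Qed.

Lemma J_trace J : is_complex_conjugation J -> rd J = - ra J.
Proof.
  intros [Hdet Hinv].
  assert (HJ : rdet J <> 0) by (intro; lra).
  assert (Hc : conj_is J Iden Iden).
  { intros z Hz. unfold in_h in Hz. rewrite (cmob_some J z) by (first [assumption | intro; lra]). rewrite mob_Iden.
    rewrite <- (cmob_some J z) by (first [assumption | intro; lra]). rewrite Hinv by auto. rewrite mob_Iden. reflexivity. }
  assert (HI : rdet Iden = 1) by (unfold rdet, Iden; simpl; ring).
  pose proof (conj_is_mz J Iden Iden HJ ltac:(intro; lra) ltac:(intro; lra) Hc) as H1.
  assert (HX : rdet (rmul (rmul J Iden) J) <> 0).
  { rewrite !rdet_mul, HI. apply Rmult_integral_contrapositive; split; lra. }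
  pose proof (rel_of_mz (rmul (rmul J Iden) J) Iden HX ltac:(intro; lra) H1) as R.
  destruct (rel_prop _ _ R HI) as [E1 [E2 [E3 E4]]].
  unfold rdet in Hdet. destruct J as [a b c d]; unfold rmul, Iden in *; simpl in *.
  assert (Hb : b * (a + d) = 0) by nra.
  assert (Hc' : c * (a + d) = 0) by nra.
  assert (Had : a * a = d * d) by nra.
  destruct (sq_pm _ _ Had) as [E|E]; [|lra].
  rewrite <- E in *. destruct (Req_dec a 0) as [Z|Z]; [lra|].
  assert (b = 0) by (apply Rmult_integral in Hb; destruct Hb; [auto|exfalso; lra]).
  exfalso. rewrite H in Hdet. nra.
Qed.

Lemma conj_int J M m' : is_complex_conjugation J -> rdet M = 1 -> zdet m' = 1%Z ->
  conj_is J M (rmat_of_z m') ->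
  exists w, (w = rdet J \/ w = - rdet J) /\
    let X := rmul (rmul J M) J in
    ra X = w * IZR (za m') /\ rb X = w * IZR (zb m') /\
    rc X = w * IZR (zc m') /\ rd X = w * IZR (zd m').
Proof.
  intros [Hdet Hinv] HM Hm' Hc.
  assert (HJ : rdet J <> 0) by (intro; lra).
  assert (Hd' : rdet (rmat_of_z m') = 1) by (rewrite rdet_z, Hm'; reflexivity).
  pose proof (conj_is_mz J M (rmat_of_z m') HJ ltac:(intro; lra) ltac:(intro; lra) Hc) as H1.
  assert (HX : rdet (rmul (rmul J M) J) = rdet J * rdet J).
  { rewrite !rdet_mul, HM. ring. }
  pose proof (rel_of_mz (rmul (rmul J M) J) (rmat_of_z m') ltac:(rewrite HX; apply Rmult_integral_contrapositive; split; lra)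
     ltac:(intro; lra) H1) as R.
  pose proof (rel_prop _ _ R Hd') as P. cbv zeta in P.
  set (w := ra (rmul (rmul J M) J) * rd (rmat_of_z m') - rc (rmul (rmul J M) J) * rb (rmat_of_z m')) in P.
  exists w. destruct P as [E1 [E2 [E3 E4]]].
  split.
  - assert (w * w = rdet J * rdet J).
    { rewrite <- HX. unfold rdet at 1. rewrite E1, E2, E3, E4.
      replace (w * ra (rmat_of_z m') * (w * rd (rmat_of_z m')) - w * rb (rmat_of_z m') * (w * rc (rmat_of_z m')))
        with (w * w * rdet (rmat_of_z m')) by (unfold rdet; ring). rewrite Hd'. ring. }
    apply sq_pm; auto.
  - simpl. unfold rmat_of_z in *; simpl in *. auto.
Qed.
Open Scope R_scope.
Open Scope R_scope.
Lemma adm_T (a b c p q r s D w : R) : D = a*a + b*c -> 0 < D -> p*s - q*r = 1 ->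
  (w = D \/ w = - D) ->
  a*a*p + a*b*r + a*c*q + b*c*s = w * s ->
  b*c*p - a*b*r - a*c*q + a*a*s = w * p ->
  a*b*p + b*b*r - a*a*q - a*b*s = - w * q ->
  a*c*p - a*a*r + c*c*q - a*c*s = - w * r ->
  a*(p - s) + c*q + b*r = 0.
Proof.
  intros HD Dp Hg [Hw|Hw] E1 E4 E2 E3; subst w.
  - set (T := a*(p - s) + c*q + b*r).
    assert (bT : b * T = 0) by (unfold T; subst D; nra).
    assert (cT : c * T = 0) by (unfold T; subst D; nra).
    assert (aT : a * T = 0) by (unfold T; subst D; nra).
    destruct (Req_dec T 0) as [Z|Z]; auto. exfalso.
    assert (a = 0) by (apply Rmult_integral in aT; tauto).
    assert (b = 0) by (apply Rmult_integral in bT; tauto).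
    assert (c = 0) by (apply Rmult_integral in cT; tauto).
    subst. nra.
  - exfalso.
    assert (Hps : p + s = 0) by nra.
    assert (s = - p) by lra. subst s.
    assert (C1 : D*(b*r - q*c) = 0).
    { replace (D*(b*r - q*c)) with ((a*a*p + a*b*r + a*c*q + b*c*(-p) - D*p)*a + (a*b*p + b*b*r - a*a*q - a*b*(-p) - D*q)*c) by (subst D; ring).
      rewrite E1, E2. ring. }
    assert (C2 : 2*D*(a*q - b*p) = 0).
    { replace (2*D*(a*q - b*p)) with ((a*a*p + a*b*r + a*c*q + b*c*(-p) - D*p)*b - (a*b*p + b*b*r - a*a*q - a*b*(-p) - D*q)*a) by (subst D; ring).
      rewrite E1, E2. ring. }
    assert (C3 : 2*D*(c*p - a*r) = 0).
    { replace (2*D*(c*p - a*r)) with ((a*c*p - a*a*r + c*c*q - a*c*(-p) - D*r)*a + (b*c*p - a*b*r - a*c*q + a*a*(-p) - D*(-p))*c) by (subst D; ring).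
      rewrite E3, E4. ring. }
    assert (F1 : b*r = q*c) by (apply Rmult_integral in C1; destruct C1; lra).
    assert (F2 : a*q = b*p) by (apply Rmult_integral in C2; destruct C2 as [C|C]; [apply Rmult_integral in C; lra| lra]).
    assert (F3 : c*p = a*r) by (apply Rmult_integral in C3; destruct C3 as [C|C]; [apply Rmult_integral in C; lra| lra]).
    assert (G0 : a*a*(q*r) = (a*q)*(a*r)) by ring.
    rewrite F2, <- F3 in G0.
    assert (Hqr : p*p + q*r = -1) by lra.
    assert (G : - (a*a) = p*p*D) by (subst D; nra).
    assert (Hpp : p*p*D = 0) by nra.
    assert (Hp : p = 0) by (apply Rmult_integral in Hpp; destruct Hpp as [h|h]; [apply Rmult_integral in h; tauto|lra]).
    assert (Haa : a*a = 0) by nra.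
    assert (Ha : a = 0) by (apply Rmult_integral in Haa; tauto).
    subst p a.
    assert (G1 : D * (r*r) = - (c*c)) by (subst D; nra).
    assert (Hrr : D*(r*r) = 0) by nra.
    assert (Hr : r = 0) by (apply Rmult_integral in Hrr; destruct Hrr as [h|h]; [lra|apply Rmult_integral in h; tauto]).
    subst r. lra.
Qed.

Lemma int_ratio (x w D : R) (N z : Z) : 0 < D -> (0 < N)%Z -> (w = -D \/ w = D) ->
  (N | z)%Z -> IZR N * x = w * IZR z -> exists n, x = D * IZR n.
Proof. intros HD HN Hw [k Hk] E. subst z. rewrite mult_IZR in E.
  assert (HNr : IZR N <> 0) by (apply not_0_IZR; lia).
  assert (x = w * IZR k) by (apply (Rmult_eq_reg_l (IZR N)); [rewrite E; ring|auto]).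
  destruct Hw; subst w.
  - exists (-k)%Z. rewrite opp_IZR. rewrite H. ring.
  - exists k. auto. Qed.

Lemma int_ratio2 (x w D : R) (z : Z) : (w = -D \/ w = D) -> D + x = w * IZR z ->
  exists v, x = D * IZR v.
Proof. intros Hw E. destruct Hw; subst w.
  - exists (-z - 1)%Z. rewrite minus_IZR, opp_IZR. simpl. lra.
  - exists (z - 1)%Z. rewrite minus_IZR. simpl. lra. Qed.

Lemma div_of_gamma N m : in_GammaN N m -> (N | zb m)%Z /\ (N | zc m)%Z.
Proof. intros [_ [[_ [H2 [H3 _]]]|[_ [H2 [H3 _]]]]]; simpl in *.
  - rewrite Z.sub_0_r in H2, H3. auto.
  - rewrite Z.sub_0_r in H2, H3. split; apply Z.divide_opp_r; auto. Qed.

Lemma main_setup G J m : real_congruence_group G J -> G m -> admissible J m ->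
  zdet m = 1%Z /\ exists A B C s, 0 < s /\ is_rat A /\ is_rat B /\ is_rat C /\
   ra J = s*A /\ rb J = s*B /\ rc J = s*C /\ rd J = - (s*A) /\ A*A + B*C = 1 /\
   A*(IZR (za m) - IZR (zd m)) + C*IZR (zb m) + B*IZR (zc m) = 0.
Proof.
  intros [[Hdet1 _] [HJ [_ [N [HN1 [_ HstN]]]]]] Gm Hadm.
  assert (Hm : zdet m = 1%Z) by auto. split; [auto|].
  pose proof (J_trace J HJ) as Htr.
  pose proof HJ as [HdJ _].
  set (a := ra J) in *. set (b := rb J) in *. set (c := rc J) in *.
  set (D := a*a + b*c).
  assert (HrdJ : rdet J = - D) by (unfold rdet, D; fold a b c; rewrite Htr; ring).
  assert (Dpos : 0 < D) by lra.
  assert (HN : (0 < N)%Z) by lia.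
  assert (Hw : forall w, (w = rdet J \/ w = - rdet J) -> (w = -D \/ w = D)).
  { intros w [h|h]; rewrite h, HrdJ; [left|right]; ring. }
  set (U := ZMat 1 N 0 1).
  assert (HU : in_GammaN N U).
  { split; [unfold zdet, U; cbn [za zb zc zd]; ring|]. left. unfold zmat_eq_mod, U, zid; cbn [za zb zc zd].
    split; [|split; [|split]]; rewrite ?Z.sub_diag, ?Z.sub_0_r; auto using Z.divide_0_r, Z.divide_refl. }
  destruct (proj1 HstN U HU) as [m1 [Hm1 Hc1]].
  assert (HdU : rdet (rmat_of_z U) = 1) by (rewrite rdet_z, (proj1 HU); reflexivity).
  destruct (conj_int J _ m1 HJ HdU (proj1 Hm1) Hc1) as [w1 [Hw1 [E1 [E2 [E3 E4]]]]].
  apply Hw in Hw1.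
  cbn [rmul rmat_of_z ra rb rc rd U za zb zc zd] in E1, E2, E3, E4.
  fold a b c in E1, E2, E3, E4. rewrite ?Htr in E1; rewrite ?Htr in E2; rewrite ?Htr in E3; rewrite ?Htr in E4. fold a in E1, E2, E3, E4.
  destruct (div_of_gamma N m1 Hm1) as [Db1 Dc1].
  destruct (int_ratio (a*a) (- w1) D N (zb m1) Dpos HN ltac:(destruct Hw1; [right|left]; lra) Db1)
    as [n Hn].
  { rewrite <- Ropp_mult_distr_l, <- E2. try change (IZR 1) with 1; try change (IZR 0) with 0. ring. }
  destruct (int_ratio (c*c) w1 D N (zc m1) Dpos HN Hw1 Dc1) as [l Hl].
  { rewrite <- E3. try change (IZR 1) with 1; try change (IZR 0) with 0. ring. }
  destruct (int_ratio2 (IZR N * (a*c)) w1 D (za m1) Hw1) as [v0 Hv0].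
  { rewrite <- E1. try change (IZR 1) with 1; try change (IZR 0) with 0. unfold D. ring. }
  set (L := ZMat 1 0 N 1).
  assert (HL : in_GammaN N L).
  { split; [unfold zdet, L; cbn [za zb zc zd]; ring|]. left. unfold zmat_eq_mod, L, zid; cbn [za zb zc zd].
    split; [|split; [|split]]; rewrite ?Z.sub_diag, ?Z.sub_0_r; auto using Z.divide_0_r, Z.divide_refl. }
  destruct (proj1 HstN L HL) as [m2 [Hm2 Hc2]].
  assert (HdL : rdet (rmat_of_z L) = 1) by (rewrite rdet_z, (proj1 HL); reflexivity).
  destruct (conj_int J _ m2 HJ HdL (proj1 Hm2) Hc2) as [w2 [Hw2 [F1 [F2 [F3 F4]]]]].
  apply Hw in Hw2.
  cbn [rmul rmat_of_z ra rb rc rd L za zb zc zd] in F1, F2, F3, F4.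
  fold a b c in F1, F2, F3, F4. rewrite ?Htr in F1; rewrite ?Htr in F2; rewrite ?Htr in F3; rewrite ?Htr in F4. fold a in F1, F2, F3, F4.
  destruct (div_of_gamma N m2 Hm2) as [Db2 Dc2].
  destruct (int_ratio (b*b) w2 D N (zb m2) Dpos HN Hw2 Db2) as [mm Hmm].
  { rewrite <- F2. try change (IZR 1) with 1; try change (IZR 0) with 0. ring. }
  destruct (int_ratio2 (IZR N * (a*b)) w2 D (za m2) Hw2) as [u0 Hu0].
  { rewrite <- F1. try change (IZR 1) with 1; try change (IZR 0) with 0. unfold D. ring. }
  destruct (rationalize a b c D N n mm l u0 v0 eq_refl Dpos HN Hn Hmm Hl Hu0 Hv0)
    as [A [B [C [RA [RB [RC [Ea [Eb Ec]]]]]]]].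
  set (s := sqrt D) in *.
  assert (Hs : 0 < s) by (apply sqrt_lt_R0; auto).
  assert (Hss : s * s = D) by (apply sqrt_sqrt; lra).
  exists A, B, C, s. split; [auto|]. split; [auto|]. split; [auto|]. split; [auto|].
  split; [auto|]. split; [auto|]. split; [auto|]. split; [rewrite Htr; fold a; rewrite Ea; ring|].
  split.
  { assert (Q : s*s*(A*A+B*C) = a*a+b*c) by (rewrite Ea, Eb, Ec; ring).
    apply (Rmult_eq_reg_l (s*s)); [|nra]. rewrite Q. fold D. rewrite Hss. ring. }
  assert (Hinv : zdet (zinv m) = 1%Z) by (unfold zdet, zinv in *; simpl; lia).
  assert (HdM : rdet (rmat_of_z m) = 1) by (rewrite rdet_z, Hm; reflexivity).
  destruct (conj_int J _ (zinv m) HJ HdM Hinv Hadm) as [w [Hw0 [G1 [G2 [G3 G4]]]]].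
  apply Hw in Hw0.
  cbn [rmul rmat_of_z ra rb rc rd zinv za zb zc zd] in G1, G2, G3, G4.
  fold a b c in G1, G2, G3, G4. rewrite ?Htr in G1; rewrite ?Htr in G2; rewrite ?Htr in G3; rewrite ?Htr in G4. fold a in G1, G2, G3, G4.
  rewrite opp_IZR in G2, G3.
  assert (Hg : IZR (za m) * IZR (zd m) - IZR (zb m) * IZR (zc m) = 1).
  { unfold rdet in HdM. exact HdM. }
  assert (T : a*(IZR (za m) - IZR (zd m)) + c*IZR (zb m) + b*IZR (zc m) = 0).
  { apply (adm_T a b c (IZR (za m)) (IZR (zb m)) (IZR (zc m)) (IZR (zd m)) D w eq_refl Dpos Hg
      ltac:(destruct Hw0; [right|left]; auto)).
    - rewrite <- G1. ring.
    - rewrite <- G4. ring.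
    - rewrite <- Ropp_mult_distr_l, Ropp_mult_distr_r, <- G2. ring.
    - rewrite <- Ropp_mult_distr_l, Ropp_mult_distr_r, <- G3. ring. }
  rewrite Ea, Eb, Ec in T.
  apply (Rmult_eq_reg_l s). 2: (intro; lra). rewrite Rmult_0_r. rewrite <- T. ring.
Qed.
Open Scope R_scope.
Open Scope R_scope.

Lemma cross_C (u1 v1 u2 v2 : C) : v1 <> 0%C -> v2 <> 0%C ->
  ((u1 / v1 = u2 / v2) <-> (u1 * v2 = u2 * v1))%C.
Proof. intros H1 H2. split; intros E.
  - replace u1 with (u1/v1*v1)%C by (field; auto). rewrite E. field; auto.
  - replace u1 with (u1*v2/v2)%C by (field; auto). rewrite E. field; auto. Qed.

Lemma Csub0 (u v : C) : (u - v = 0)%C -> u = v.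
Proof. intros H. replace u with ((u - v) + v)%C by ring. rewrite H. ring. Qed.
Lemma Csub0' (u v : C) : u = v -> (u - v = 0)%C.
Proof. intros ->. ring. Qed.

Lemma Rdiv_cross a b c d : b <> 0 -> d <> 0 -> (a / b = c / d <-> a * d = c * b).
Proof. intros Hb Hd. split; intros E.
  - apply (Rmult_eq_reg_r (/ b * / d)). 2: apply Rmult_integral_contrapositive; split; apply Rinv_neq_0_compat; auto.
    transitivity (a / b); [field; auto|]. rewrite E. field; auto.
  - apply (Rmult_eq_reg_r (b * d)). 2: apply Rmult_integral_contrapositive; split; auto.
    transitivity (a * d); [field; auto|]. rewrite E. field; auto. Qed.

Definition Mg (p q r s : R) := RMat p q r s.
Definition MJ (sg A B C : R) := RMat (sg*A) (sg*B) (sg*C) (-(sg*A)).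

Lemma diff_comp p q r s A B C sg x y :
  ((RtoC (ra (Mg p q r s)) * (x,y) + RtoC (rb (Mg p q r s))) * den (MJ sg A B C) (Cconj (x,y)) -
   (RtoC (ra (MJ sg A B C)) * Cconj (x,y) + RtoC (rb (MJ sg A B C))) * den (Mg p q r s) (x,y))%C =
  (sg * ((p*C - A*r)*(x*x+y*y) + (-A*(p+s) + q*C - B*r)*x + (-q*A - B*s)),
   - sg * y * (A*(p-s) + q*C + B*r)).
Proof. cbv [Mg MJ den Cconj RtoC Cmult Cplus Cminus Copp ra rb rc rd fst snd]. f_equal; ring. Qed.

Lemma key_eq p q r s A B C sg x y : 0 < sg -> p*s - q*r = 1 -> A*A + B*C = 1 ->
  A*(p-s) + C*q + B*r = 0 -> y <> 0 ->
  (mob (Mg p q r s) (Some (x,y)) = cmob (MJ sg A B C) (Some (x,y)) <->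
   (p*C - A*r)*(x*x+y*y) + (-A*(p+s) + q*C - B*r)*x + (-q*A - B*s) = 0).
Proof.
  intros Hs Hd HA T Hy.
  assert (D1 : rdet (Mg p q r s) <> 0) by (unfold rdet, Mg; simpl; intro; lra).
  assert (D2 : rdet (MJ sg A B C) <> 0).
  { unfold rdet, MJ; simpl. intro E. assert (H : sg*sg*(A*A+B*C) = - (sg * A * - (sg * A) - sg * B * (sg * C))) by ring.
    rewrite E, HA in H. nra. }
  rewrite mob_some by (apply den_nz; auto).
  rewrite cmob_some by auto.
  assert (Dn1 : den (Mg p q r s) (x,y) <> 0%C) by (apply den_nz; auto).
  assert (Dn2 : den (MJ sg A B C) (Cconj (x,y)) <> 0%C) by (apply den_nz; auto; simpl; intro; lra).
  split.
  - intros E. apply Some_inj in E. unfold mz in E. apply (proj1 (cross_C _ _ _ _ Dn1 Dn2)) in E.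
    apply Csub0' in E. rewrite diff_comp in E. injection E as E1 E2.
    apply Rmult_integral in E1. destruct E1; [lra|auto].
  - intros E. f_equal. unfold mz. apply (proj2 (cross_C _ _ _ _ Dn1 Dn2)). apply Csub0. rewrite diff_comp.
    rewrite E. replace (A*(p-s) + q*C + B*r) with 0 by lra. apply injective_projections; simpl; ring.
Qed.

Lemma key_real p q r s A B C sg x : 0 < sg -> p*s - q*r = 1 -> A*A + B*C = 1 ->
  (mob (Mg p q r s) (Some (x,0)) = cmob (MJ sg A B C) (Some (x,0)) <->
   (p*C - A*r)*(x*x) + (-A*(p+s) + q*C - B*r)*x + (-q*A - B*s) = 0).
Proof.
  intros Hs Hd HA.
  unfold cmob. replace (pconj (Some (x,0))) with (Some (x,0)) by
    (unfold pconj, Cconj; simpl; f_equal; f_equal; ring).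
  assert (DC : forall M, den M (x,0) = 0%C <-> rc M * x + rd M = 0).
  { intros M. unfold den, RtoC, Cmult, Cplus; simpl. split; intros E.
    - injection E as E1 E2. lra.
    - f_equal; [lra|ring]. }
  assert (Q : forall M, den M (x,0) <> 0%C -> mz M (x,0) = ((ra M * x + rb M)/(rc M * x + rd M), 0)).
  { intros M HM. assert (rc M * x + rd M <> 0) by (intro E; apply HM, DC, E).
    cbv [mz den RtoC Cmult Cplus Cdiv Cinv fst snd]. f_equal; field; auto. }
  set (P := (p*C - A*r)*(x*x) + (-A*(p+s) + q*C - B*r)*x + (-q*A - B*s)).
  assert (PE : sg * P = (p*x+q)*(sg*C*x - sg*A) - (sg*A*x + sg*B)*(r*x+s)) by (unfold P; ring).
  assert (Hsg : sg <> 0) by lra.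
  destruct (Req_dec (r*x+s) 0) as [E1|E1]; destruct (Req_dec (sg*C*x - sg*A) 0) as [E2|E2].
  - rewrite !mob_none by (apply DC; simpl; lra). split; auto. intros _.
    apply (Rmult_eq_reg_l sg); auto. rewrite PE, E1, E2. ring.
  - rewrite (mob_none (Mg p q r s)) by (apply DC; simpl; lra).
    rewrite (mob_some (MJ sg A B C)) by (intro E; apply DC in E; simpl in E; lra).
    split; [discriminate|]. intros HP. exfalso.
    assert (p*x+q <> 0) by (intro; assert (q = -(p*x)) by lra; assert (s = -(r*x)) by lra; subst q s; nra).
    assert (sg*P = (p*x+q)*(sg*C*x - sg*A)) by (rewrite PE, E1; ring).
    rewrite HP in H0. symmetry in H0. rewrite Rmult_0_r in H0. apply Rmult_integral in H0. tauto.
  - rewrite (mob_none (MJ sg A B C)) by (apply DC; simpl; lra).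
    rewrite (mob_some (Mg p q r s)) by (intro E; apply DC in E; simpl in E; lra).
    split; [discriminate|]. intros HP. exfalso.
    assert (sg*A*x + sg*B <> 0).
    { intro E3. assert (sg*sg*(A*A+B*C) = 0).
      { replace (sg*sg*(A*A+B*C)) with ((sg*A*x + sg*B)*(sg*C) - (sg*C*x - sg*A)*(sg*A)) by ring.
        rewrite E3, E2. ring. }
      rewrite HA in H. nra. }
    assert (sg*P = -((sg*A*x + sg*B)*(r*x+s))) by (rewrite PE, E2; ring).
    rewrite HP in H0. rewrite Rmult_0_r in H0. assert ((sg*A*x + sg*B)*(r*x+s) = 0) by lra.
    apply Rmult_integral in H1. tauto.
  - rewrite !mob_some by (intro E; apply DC in E; simpl in E; lra).
    rewrite !Q by (intro E; apply DC in E; simpl in E; lra). simpl.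
    replace (sg * C * x + - (sg * A)) with (sg*C*x - sg*A) by ring.
    split.
    + intros E. apply Some_inj in E. injection E as E. apply (proj1 (Rdiv_cross _ _ _ _ E1 E2)) in E.
      apply (Rmult_eq_reg_l sg); auto. rewrite PE, E; ring.
    + intros HP. do 2 f_equal. apply (proj2 (Rdiv_cross _ _ _ _ E1 E2)).
      assert (sg*P = 0) by (rewrite HP; ring). rewrite PE in H. lra.
Qed.

Lemma key_none p q r s A B C sg : 0 < sg -> p*s - q*r = 1 -> A*A + B*C = 1 ->
  (mob (Mg p q r s) None = cmob (MJ sg A B C) None <-> p*C - A*r = 0).
Proof.
  intros Hs Hd HA. unfold cmob, pconj, mob, Mg, MJ; simpl.
  destruct (Req_EM_T r 0) as [Er|Er]; destruct (Req_EM_T (sg*C) 0) as [Ec|Ec].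
  - assert (C = 0) by (apply Rmult_integral in Ec; destruct Ec; [lra|auto]).
    subst. split; auto. intros _. ring.
  - split; [discriminate|]. intros E. subst r. exfalso. apply Ec.
    assert (p <> 0) by (intro; subst; lra).
    assert (E' : p * C = 0) by lra.
    apply Rmult_integral in E'. destruct E'; [tauto|]. subst; ring.
  - assert (C = 0) by (apply Rmult_integral in Ec; destruct Ec; [lra|auto]). subst C.
    split; [discriminate|]. intros E. exfalso. assert (A*A = 1) by lra.
    assert (A*r = 0) by lra. apply Rmult_integral in H0. destruct H0; [subst; lra|auto].
  - assert (Cn : C <> 0) by (intro; subst; apply Ec; ring).
    split.
    + intros E. apply Some_inj in E. injection E as E.
      apply (proj1 (Rdiv_cross _ _ _ _ Er Ec)) in E. apply (Rmult_eq_reg_l sg); [|lra]. nra.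
    + intros E. do 2 f_equal. apply (proj2 (Rdiv_cross _ _ _ _ Er Ec)). nra.
Qed.
Open Scope R_scope.
Open Scope R_scope.

Lemma Cmod_sub (a b c d : R) : Cmod ((a,b) - (c,d))%C = sqrt ((a-c)*(a-c) + (b-d)*(b-d)).
Proof. unfold Cmod, Cminus, Cplus, Copp; simpl. f_equal. ring. Qed.

Lemma sqrt_ge_abs1 a b : Rabs a <= sqrt (a*a + b*b).
Proof. rewrite <- sqrt_Rsqr_abs. apply sqrt_le_1_alt. unfold Rsqr. nra. Qed.
Lemma sqrt_ge_abs2 a b : Rabs b <= sqrt (a*a + b*b).
Proof. rewrite <- sqrt_Rsqr_abs. apply sqrt_le_1_alt. unfold Rsqr. nra. Qed.

Lemma sqrt_le_sum a b : sqrt (a*a + b*b) <= Rabs a + Rabs b.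
Proof.
  rewrite <- (sqrt_Rsqr (Rabs a + Rabs b)) by (pose proof (Rabs_pos a); pose proof (Rabs_pos b); lra).
  apply sqrt_le_1_alt. unfold Rsqr.
  pose proof (Rabs_pos a); pose proof (Rabs_pos b).
  assert (Rabs a * Rabs a = a * a) by (rewrite <- Rabs_mult; apply Rabs_pos_eq; nra).
  assert (Rabs b * Rabs b = b * b) by (rewrite <- Rabs_mult; apply Rabs_pos_eq; nra).
  nra.
Qed.

Lemma sqrt_lt_sq u R : 0 <= u -> 0 < R -> u < R * R -> sqrt u < R.
Proof. intros Hu HR H. rewrite <- (sqrt_square R) by lra. apply sqrt_lt_1_alt. lra. Qed.

Lemma sqrt_diff u v : 0 <= u -> 0 <= v -> Rabs (sqrt u - sqrt v) <= sqrt (Rabs (u - v)).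
Proof.
  intros Hu Hv. set (a := sqrt u). set (b := sqrt v).
  assert (Ha : 0 <= a) by apply sqrt_pos. assert (Hb : 0 <= b) by apply sqrt_pos.
  assert (Eu : u = a*a) by (symmetry; apply sqrt_sqrt; auto).
  assert (Ev : v = b*b) by (symmetry; apply sqrt_sqrt; auto).
  rewrite <- (sqrt_Rsqr (Rabs (a - b))) by apply Rabs_pos.
  apply sqrt_le_1_alt. unfold Rsqr. rewrite Eu, Ev.
  destruct (Rle_dec b a).
  - rewrite !Rabs_pos_eq by nra. nra.
  - rewrite Rabs_left by lra. rewrite Rabs_left by nra. nra.
Qed.

Lemma sqrt_le_self e : 0 <= e -> e <= 1 -> e <= sqrt e.
Proof. intros. rewrite <- (sqrt_square e) at 1 by lra. apply sqrt_le_1_alt. nra. Qed.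

Lemma lt_sqrt a b : 0 <= a -> a * a < b -> a < sqrt b.
Proof. intros Ha H. rewrite <- (sqrt_square a) at 1 by auto. apply sqrt_lt_1_alt. nra. Qed.

Lemma Rabs_sq e : Rabs e * Rabs e = e * e.
Proof. rewrite <- Rabs_mult. apply Rabs_pos_eq. nra. Qed.
Open Scope R_scope.
Open Scope R_scope.

Definition circ_ok (S : pt -> Prop) (lo hi : R) : Prop :=
  lo < hi /\ is_rat lo /\ is_rat hi /\
  (forall x y, 0 < y -> (S (Some (x,y)) <-> y*y = (x - lo)*(hi - x))) /\
  (forall x, S (Some (x,0)) <-> (x = lo \/ x = hi)) /\
  (forall x y, y < 0 -> ~ S (Some (x,y))) /\ ~ S None.

Definition fc (lo hi t : R) : pt :=
  Some (lo + t*(hi-lo), sqrt ((t*(hi-lo))*((1-t)*(hi-lo)))).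
Definition gc (lo hi : R) (p : pt) : R :=
  match p with Some z => (fst z - lo)/(hi - lo) | None => 0 end.

Lemma circ_fact S lo hi x y : circ_ok S lo hi -> S (Some (x,y)) ->
  0 <= y /\ y*y = (x - lo)*(hi - x).
Proof. intros (Hlh & _ & _ & H1 & H0 & Hn & _) HS.
  destruct (Rtotal_order y 0) as [Hy|[Hy|Hy]].
  - exfalso; exact (Hn x y Hy HS).
  - subst. apply H0 in HS. split; [lra|]. destruct HS; subst; ring.
  - split; [lra|]. apply H1; auto. Qed.

Lemma circ_conv S lo hi x y : circ_ok S lo hi -> 0 <= y -> y*y = (x - lo)*(hi - x) ->
  S (Some (x,y)).
Proof. intros (Hlh & _ & _ & H1 & H0 & Hn & _) Hy E.
  destruct (Req_dec y 0) as [Z|Z].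
  - subst. apply H0. assert ((x-lo)*(hi-x) = 0) by lra.
    apply Rmult_integral in H. destruct H; [left|right]; lra.
  - apply H1; auto. lra. Qed.

Lemma fc_S S lo hi t : circ_ok S lo hi -> 0 <= t <= 1 -> S (fc lo hi t).
Proof. intros C Ht. pose proof C as (Hlh & _).
  unfold fc. apply (circ_conv S lo hi); auto.
  - apply sqrt_pos.
  - rewrite sqrt_sqrt by (apply Rmult_le_pos; nra). ring. Qed.

Lemma gc_int S lo hi p : circ_ok S lo hi -> S p -> 0 <= gc lo hi p <= 1.
Proof. intros C HS. pose proof C as (Hlh & _ & _ & _ & _ & _ & HN).
  destruct p as [[x y]|]; [|contradiction].
  destruct (circ_fact S lo hi x y C HS) as [Hy E]. simpl.
  assert (0 <= (x - lo)*(hi - x)) by nra.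
  assert (lo <= x <= hi).
  { split.
    - destruct (Rle_dec lo x); auto. exfalso.
      assert ((lo - x)*(hi - x) > 0) by (apply Rmult_gt_0_compat; lra). lra.
    - destruct (Rle_dec x hi); auto. exfalso.
      assert ((x - lo)*(x - hi) > 0) by (apply Rmult_gt_0_compat; lra). lra. }
  split; [apply Rdiv_le_0_compat; lra|]. apply (proj1 (Rcomplements.Rdiv_le_1 (x - lo) (hi - lo) ltac:(lra))); lra. Qed.

Lemma gc_fc lo hi t : lo < hi -> gc lo hi (fc lo hi t) = t.
Proof. intros H. unfold gc, fc; simpl. field. lra. Qed.

Lemma fc_gc S lo hi p : circ_ok S lo hi -> S p -> fc lo hi (gc lo hi p) = p.
Proof. intros C HS. pose proof C as (Hlh & _ & _ & _ & _ & _ & HN).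
  destruct p as [[x y]|]; [|contradiction].
  destruct (circ_fact S lo hi x y C HS) as [Hy E]. unfold fc, gc; simpl.
  f_equal. f_equal; [field; lra|].
  replace ((x - lo) / (hi - lo) * (hi - lo) * ((1 - (x - lo) / (hi - lo)) * (hi - lo))) with (y*y)
    by (rewrite E; field; lra).
  apply sqrt_square; auto. Qed.

Lemma h_est lo hi s t : lo < hi -> 0 <= s <= 1 -> 0 <= t <= 1 ->
  Rabs (sqrt ((s*(hi-lo))*((1-s)*(hi-lo))) - sqrt ((t*(hi-lo))*((1-t)*(hi-lo))))
   <= (hi - lo) * sqrt (Rabs (s - t)).
Proof. intros H Hs Ht. set (D := hi - lo).
  eapply Rle_trans; [apply sqrt_diff; apply Rmult_le_pos; unfold D; nra|].
  replace (D * sqrt (Rabs (s - t))) with (sqrt (D*D*Rabs(s-t))).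
  2: { rewrite sqrt_mult by (unfold D; nra || apply Rabs_pos). rewrite sqrt_square by (unfold D; lra). auto. }
  apply sqrt_le_1_alt.
  replace (s * D * ((1 - s) * D) - t * D * ((1 - t) * D)) with (D*D*((s - t)*(1 - s - t))) by ring.
  rewrite !Rabs_mult. rewrite (Rabs_pos_eq D) by (unfold D; lra).
  assert (Rabs (1 - s - t) <= 1) by (apply Rabs_le; lra).
  pose proof (Rabs_pos (s - t)). assert (0 < D) by (unfold D; lra).
  apply Rmult_le_compat_l; [nra|].
  pose proof (Rabs_pos (1 - s - t)). nra. Qed.

Lemma fc_cont S lo hi t : circ_ok S lo hi -> 0 <= t <= 1 ->
  forall U, hnbhs (fc lo hi t) U ->
  exists d, 0 < d /\ forall s, 0 <= s <= 1 -> Rabs (s - t) < d -> U (fc lo hi s).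
Proof.
  intros C Ht U HU. pose proof C as (Hlh & _).
  set (D := hi - lo) in *. assert (HD : 0 < D) by (unfold D; lra).
  unfold hnbhs, fc in HU. cbv beta iota delta [Im Re fst snd] in HU. fold D in HU.
  set (Y := sqrt (t * D * ((1 - t) * D))) in *.
  set (X := lo + t * D) in *.
  destruct (Rlt_dec 0 Y) as [Hp|Hp].
  - destruct HU as (r & Hr & HrY & HB).
    set (k := r / (2*D)). assert (Hk : 0 < k) by (unfold k; apply Rdiv_lt_0_compat; lra).
    exists (Rmin 1 (k*k)). split; [apply Rmin_glb_lt; nra|].
    intros s Hs Hst. unfold fc. fold D. apply HB.
    rewrite Cmod_sub. eapply Rle_lt_trans; [apply sqrt_le_sum|].
    pose proof (h_est lo hi s t Hlh Hs Ht) as Eh. fold D in Eh. fold Y in Eh.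
    set (e := Rabs (s - t)) in *.
    assert (He1 : e < 1) by (eapply Rlt_le_trans; [exact Hst| apply Rmin_l]).
    assert (He2 : e < k*k) by (eapply Rlt_le_trans; [exact Hst| apply Rmin_r]).
    assert (He0 : 0 <= e) by apply Rabs_pos.
    assert (Hsq : sqrt e < k) by (apply sqrt_lt_sq; auto).
    assert (Hle : e <= sqrt e) by (apply sqrt_le_self; lra).
    replace (lo + s * D - X) with ((s - t) * D) by (unfold X; ring).
    rewrite Rabs_mult, (Rabs_pos_eq D) by lra. fold e.
    assert (r = 2*D*k) by (unfold k; field; lra). nra.
  - assert (HY : Y = 0) by (pose proof (sqrt_pos (t * D * ((1 - t) * D))); fold Y in H; lra).
    assert (Ht01 : t = 0 \/ t = 1).
    { assert (t * D * ((1 - t) * D) = 0).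
      { unfold Y in HY. apply sqrt_eq_0 in HY; auto. apply Rmult_le_pos; nra. }
      replace (t * D * ((1 - t) * D)) with ((t * (1 - t)) * (D * D)) in H by ring.
      apply Rmult_integral in H. destruct H as [H|H]; [|nra].
      apply Rmult_integral in H. destruct H; [left|right]; lra. }
    destruct HU as (R & HR & HU0 & HB).
    exists (Rmin (1/2) (2*R*R/(D*D))). split.
    { apply Rmin_glb_lt; [lra|]. apply Rdiv_lt_0_compat; nra. }
    intros s Hs Hst. set (e := Rabs (s - t)) in *.
    assert (He1 : e < 1/2) by (eapply Rlt_le_trans; [exact Hst| apply Rmin_l]).
    assert (He2 : e < 2*R*R/(D*D)) by (eapply Rlt_le_trans; [exact Hst| apply Rmin_r]).
    assert (He0 : 0 <= e) by apply Rabs_pos.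
    destruct (Req_dec e 0) as [E0|E0].
    { assert (s = t) by (unfold e in E0; apply Rabs_eq_0 in E0; lra). subst s. exact HU0. }
    assert (Hsh : s * (1 - s) = e * (1 - e)).
    { unfold e; destruct Ht01; subst t.
      - rewrite Rabs_pos_eq by lra. ring.
      - rewrite Rabs_left1 by lra. ring. }
    assert (Hxe : (s - t) * (s - t) = e * e) by (unfold e; rewrite Rabs_sq; auto).
    assert (Hhs : 0 < s * D * ((1 - s) * D)).
    { replace (s * D * ((1 - s) * D)) with ((s*(1-s))*(D*D)) by ring. rewrite Hsh.
      apply Rmult_lt_0_compat; [|nra]. apply Rmult_lt_0_compat; lra. }
    set (Ys := sqrt (s * D * ((1 - s) * D))).
    assert (HYs2 : Ys * Ys = e * (1 - e) * (D * D)).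
    { unfold Ys. rewrite sqrt_sqrt by lra. rewrite <- Hsh. ring. }
    assert (HYs : D*D*e/(2*R) < Ys).
    { apply lt_sqrt. { apply Rmult_le_pos; [nra|]. apply Rlt_le, Rinv_0_lt_compat; lra. }
      replace (s * D * ((1 - s) * D)) with (e * (1 - e) * (D * D)) by (rewrite <- Hsh; ring).
      assert (Q : e * (D*D) < 2*R*R).
      { apply (Rmult_lt_reg_r (/(D*D))); [apply Rinv_0_lt_compat; nra|].
        replace (e * (D * D) * / (D * D)) with e by (field; lra).
        replace (2 * R * R * / (D * D)) with (2*R*R/(D*D)) by (field; lra). auto. }
      replace (D * D * e / (2 * R) * (D * D * e / (2 * R))) with ((e * (D*D)) * (e * (D*D)) / (4*R*R))
        by (field; lra).
      apply (Rmult_lt_reg_r (4*R*R)); [nra|].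
      replace (e * (D * D) * (e * (D * D)) / (4 * R * R) * (4 * R * R)) with ((e * (D*D)) * (e * (D*D)))
        by (field; lra).
      assert (0 < e) by lra.
      assert (Hu : 0 < e * (D*D)) by (apply Rmult_lt_0_compat; nra).
      assert (A1 : (e * (D*D)) * (e * (D*D)) < (e * (D*D)) * (2*R*R)) by (apply Rmult_lt_compat_l; auto).
      assert (A2 : (e * (D*D)) * (2*R*R) <= e * (1 - e) * (D * D) * (4 * R * R)).
      { replace (e * (1 - e) * (D * D) * (4 * R * R)) with ((e * (D*D)) * ((2*R*R) * (2 * (1 - e)))) by ring.
        apply Rmult_le_compat_l; [lra|]. rewrite <- (Rmult_1_r (2*R*R)) at 1.
        apply Rmult_le_compat_l; nra. }
      lra. }
    unfold fc. fold D. fold Ys. apply HB.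
    + simpl. apply sqrt_lt_R0. lra.
    + rewrite Cmod_sub. apply sqrt_lt_sq; [apply Rplus_le_le_0_compat; apply Rle_0_sqr|lra|].
      replace (lo + s * D - X) with ((s - t) * D) by (unfold X; ring).
      assert (Q : (s - t) * D * ((s - t) * D) + Ys * Ys = D * D * e).
      { replace ((s - t) * D * ((s - t) * D)) with ((s-t)*(s-t)*(D*D)) by ring.
        rewrite Hxe, HYs2. ring. }
      assert (Q2 : D*D*e < 2 * R * Ys).
      { apply (Rmult_lt_reg_r (/(2*R))); [apply Rinv_0_lt_compat; lra|].
        replace (2 * R * Ys * / (2 * R)) with Ys by (field; lra). exact HYs. }
      nra.
Qed.

Lemma gc_cont S lo hi p : circ_ok S lo hi -> S p -> forall e, 0 < e ->
  exists U, hnbhs p U /\ forall q, S q -> U q -> Rabs (gc lo hi q - gc lo hi p) < e.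
Proof.
  intros C HS e He. pose proof C as (Hlh & _ & _ & _ & _ & _ & HN).
  set (D := hi - lo). assert (HD : 0 < D) by (unfold D; lra).
  destruct p as [[x y]|]; [|contradiction].
  destruct (circ_fact S lo hi x y C HS) as [Hy _].
  assert (Key : forall u v c, Rabs (u - x) < c * D -> Rabs (gc lo hi (Some (u,v)) - gc lo hi (Some (x,y))) < c).
  { intros u v c H. unfold gc; simpl. fold D.
    replace ((u - lo) / D - (x - lo) / D) with ((u - x) / D) by (field; lra).
    unfold Rdiv. rewrite Rabs_mult, (Rabs_pos_eq (/D)) by (apply Rlt_le, Rinv_0_lt_compat; lra).
    apply (Rmult_lt_reg_r D); auto. rewrite Rmult_assoc, Rinv_l by lra. lra. }
  destruct (Rlt_dec 0 y) as [Hp|Hp].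
  - set (r := Rmin y (e*D)). assert (Hr : 0 < r) by (apply Rmin_glb_lt; nra).
    exists (fun q => match q with Some w => Cmod (w - (x,y)) < r | None => False end).
    split.
    + unfold hnbhs. cbv beta iota delta [Im Re fst snd].
      destruct (Rlt_dec 0 y); [|contradiction].
      exists r. split; [auto|]. split; [apply Rmin_l|]. auto.
    + intros [[u v]|] _ HU; [|contradiction].
      apply Key. rewrite Cmod_sub in HU. eapply Rle_lt_trans; [apply sqrt_ge_abs1|].
      eapply Rlt_le_trans; [exact HU|apply Rmin_r].
  - assert (y = 0) by lra. subst y.
    exists (fun q => q = Some (x,0) \/ exists w, q = Some w /\ 0 < Im w /\ Cmod (w - (x, e*D/2)) < e*D/2).
    split.
    + unfold hnbhs. cbv beta iota delta [Im Re fst snd].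
      destruct (Rlt_dec 0 0); [lra|].
      exists (e*D/2). split; [nra|]. split; [left; auto|].
      intros w Hw Hc. right. exists w. auto.
    + intros q _ [E|(w & E & Hw & Hc)]; subst q.
      * unfold Rminus. rewrite Rplus_opp_r, Rabs_R0. auto.
      * destruct w as [u v]. apply Key. rewrite Cmod_sub in Hc.
        assert (0 < e*D) by (apply Rmult_lt_0_compat; lra).
        pose proof (sqrt_ge_abs1 (u - x) (v - e*D/2)). lra.
Qed.

Lemma geom_circle S lo hi : circ_ok S lo hi ->
  (exists p q : pt, p <> q /\ is_cusp p /\ is_cusp q /\ S p /\ S q /\
     forall r, is_cusp r -> S r -> r = p \/ r = q) /\
  homeomorphic_to_interval S.
Proof.
  intros C. pose proof C as (Hlh & Rlo & Rhi & H1 & H0 & Hn & HN).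
  split.
  - exists (Some (lo,0)), (Some (hi,0)).
    split; [intro E; injection E; lra|].
    split; [unfold is_cusp; cbv [Im Re fst snd]; auto|].
    split; [unfold is_cusp; cbv [Im Re fst snd]; auto|].
    split; [apply H0; auto|]. split; [apply H0; auto|].
    intros [[x y]|] Hc HS; [|contradiction].
    unfold is_cusp in Hc; cbv [Im Re fst snd] in Hc. destruct Hc as [Hy _]. subst y.
    apply H0 in HS. destruct HS; subst; auto.
  - exists (fc lo hi), (gc lo hi). unfold in_unit_interval.
    split; [intros t Ht; apply (fc_S S); auto|].
    split; [intros p Hp; apply (gc_int S); auto|].
    split; [intros t _; apply gc_fc; auto|].
    split; [intros p Hp; apply (fc_gc S); auto|].
    split; [intros t Ht U HU; apply (fc_cont S lo hi t C Ht U HU)|].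
    intros p Hp e He. apply (gc_cont S lo hi p C Hp e He).
Qed.
Open Scope R_scope.
Open Scope R_scope.

Definition line_ok (S : pt -> Prop) (x0 : R) : Prop :=
  is_rat x0 /\
  (forall x y, 0 < y -> (S (Some (x,y)) <-> x = x0)) /\
  (forall x, S (Some (x,0)) <-> x = x0) /\
  (forall x y, y < 0 -> ~ S (Some (x,y))) /\ S None.

Definition fl (x0 t : R) : pt := if Rlt_dec t 1 then Some (x0, t/(1-t)) else None.
Definition gl (p : pt) : R := match p with Some z => snd z / (1 + snd z) | None => 1 end.

Lemma line_fact S x0 x y : line_ok S x0 -> S (Some (x,y)) -> x = x0 /\ 0 <= y.
Proof. intros (_ & H1 & H0 & Hn & _) HS.
  destruct (Rtotal_order y 0) as [Hy|[Hy|Hy]].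
  - exfalso; exact (Hn x y Hy HS).
  - subst. apply H0 in HS. split; [auto|lra].
  - split; [apply (H1 x y Hy); auto|lra]. Qed.

Lemma line_conv S x0 y : line_ok S x0 -> 0 <= y -> S (Some (x0,y)).
Proof. intros (_ & H1 & H0 & Hn & _) Hy.
  destruct (Req_dec y 0) as [Z|Z]; [subst; apply H0; auto|apply H1; auto; lra]. Qed.

Lemma fl_S S x0 t : line_ok S x0 -> 0 <= t <= 1 -> S (fl x0 t).
Proof. intros C Ht. pose proof C as (_ & _ & _ & _ & HN). unfold fl.
  destruct (Rlt_dec t 1); [|auto]. apply (line_conv S x0); auto.
  apply Rdiv_le_0_compat; lra. Qed.

Lemma gl_int S x0 p : line_ok S x0 -> S p -> 0 <= gl p <= 1.
Proof. intros C HS. destruct p as [[x y]|]; [|simpl; lra].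
  destruct (line_fact S x0 x y C HS) as [_ Hy]. simpl.
  split; [apply Rdiv_le_0_compat; lra|].
  apply (proj1 (Rcomplements.Rdiv_le_1 y (1 + y) ltac:(lra))); lra. Qed.

Lemma gl_fl x0 t : 0 <= t <= 1 -> gl (fl x0 t) = t.
Proof. intros Ht. unfold fl. destruct (Rlt_dec t 1); simpl; [field; lra|lra]. Qed.

Lemma fl_gl S x0 p : line_ok S x0 -> S p -> fl x0 (gl p) = p.
Proof. intros C HS. destruct p as [[x y]|].
  - destruct (line_fact S x0 x y C HS) as [-> Hy]. unfold fl, gl; simpl.
    destruct (Rlt_dec (y / (1 + y)) 1) as [h|h].
    + f_equal. f_equal. field. split; lra.
    + exfalso. apply h. apply (Rmult_lt_reg_r (1+y)); [lra|]. field_simplify; lra.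
  - unfold fl, gl. destruct (Rlt_dec 1 1); [lra|auto]. Qed.

Lemma Cmod_vert x0 a b : Cmod ((x0, a) - (x0, b))%C = Rabs (a - b).
Proof. rewrite Cmod_sub. replace ((x0 - x0) * (x0 - x0) + (a - b) * (a - b)) with ((a-b)*(a-b)) by ring.
  rewrite <- (sqrt_Rsqr_abs). reflexivity. Qed.

Lemma fl_cont S x0 t : line_ok S x0 -> 0 <= t <= 1 ->
  forall U, hnbhs (fl x0 t) U ->
  exists d, 0 < d /\ forall s, 0 <= s <= 1 -> Rabs (s - t) < d -> U (fl x0 s).
Proof.
  intros C Ht U HU.
  destruct (Rlt_dec t 1) as [Ht1|Ht1].
  - assert (Ef : fl x0 t = Some (x0, t/(1-t))) by (unfold fl; destruct (Rlt_dec t 1); tauto).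
    rewrite Ef in HU. unfold hnbhs in HU. cbv beta iota delta [Im Re fst snd] in HU.
    set (yt := t/(1-t)) in *.
    assert (Fs : forall s, Rabs (s - t) < (1-t)/2 -> fl x0 s = Some (x0, s/(1-s)) /\ (1-t)/2 < 1 - s).
    { intros s Hs. apply Rabs_def2 in Hs. split; [|lra]. unfold fl. destruct (Rlt_dec s 1); [auto|lra]. }
    destruct (Rlt_dec 0 yt) as [Hp|Hp].
    + destruct HU as (r & Hr & HrY & HB).
      exists (Rmin ((1-t)/2) (r*(1-t)*(1-t)/2)). split.
      { apply Rmin_glb_lt; [lra|]. apply Rdiv_lt_0_compat; [|lra].
        apply Rmult_lt_0_compat; [apply Rmult_lt_0_compat|]; lra. }
      intros s Hs Hst.
      destruct (Fs s) as [-> H1s]; [eapply Rlt_le_trans; [exact Hst|apply Rmin_l]|].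
      assert (Hst2 : Rabs (s - t) < r*(1-t)*(1-t)/2) by (eapply Rlt_le_trans; [exact Hst|apply Rmin_r]).
      apply HB. rewrite Cmod_vert. unfold yt.
      replace (s / (1 - s) - t / (1 - t)) with ((s - t) / ((1-s)*(1-t))) by (field; lra).
      unfold Rdiv. rewrite Rabs_mult, (Rabs_pos_eq (/ _)) by (apply Rlt_le, Rinv_0_lt_compat; nra).
      apply (Rmult_lt_reg_r ((1-s)*(1-t))); [nra|].
      rewrite Rmult_assoc, Rinv_l by nra. rewrite Rmult_1_r.
      pose proof (Rabs_pos (s - t)).
      assert (r * ((1-t)/2 * (1-t)) <= r * ((1 - s) * (1 - t))).
      { apply Rmult_le_compat_l; [lra|]. apply Rmult_le_compat_r; lra. }
      lra.
    + assert (t = 0).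
      { destruct (Rle_dec t 0); [lra|]. exfalso. apply Hp. unfold yt. apply Rdiv_lt_0_compat; lra. }
      subst t. destruct HU as (R & HR & HU0 & HB).
      exists (Rmin (1/2) (R/2)). split; [apply Rmin_glb_lt; lra|].
      intros s Hs Hst.
      assert (Hs1 : s < 1/2) by (rewrite Rminus_0_r, Rabs_pos_eq in Hst by lra;
                                   eapply Rlt_le_trans; [exact Hst|apply Rmin_l]).
      assert (Hs2 : s < R/2) by (rewrite Rminus_0_r, Rabs_pos_eq in Hst by lra;
                                   eapply Rlt_le_trans; [exact Hst|apply Rmin_r]).
      destruct (Fs s) as [-> H1s]; [rewrite Rminus_0_r, Rabs_pos_eq by lra; lra|].
      destruct (Req_dec s 0) as [Z|Z].
      * subst s. exact HU0.
      * assert (Hys : 0 < s/(1-s)) by (apply Rdiv_lt_0_compat; lra).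
        assert (Hys2 : s/(1-s) <= 2*s).
        { apply (Rmult_le_reg_r (1-s)); [lra|]. unfold Rdiv. rewrite Rmult_assoc, Rinv_l by lra. nra. }
        apply HB; [simpl; auto|]. rewrite Cmod_vert. apply Rabs_def1; lra.
  - assert (t = 1) by lra. subst t.
    assert (Ef : fl x0 1 = None) by (unfold fl; destruct (Rlt_dec 1 1); [lra|auto]).
    rewrite Ef in HU. destruct HU as (C0 & HC0 & HU0 & HB).
    exists (1/(1+C0)). split; [apply Rdiv_lt_0_compat; lra|].
    intros s Hs Hst. unfold fl. destruct (Rlt_dec s 1) as [h|h]; [|exact HU0].
    apply HB. simpl. rewrite Rabs_left in Hst by lra.
    apply (Rmult_lt_reg_r (1-s)); [lra|]. unfold Rdiv. rewrite Rmult_assoc, Rinv_l by lra.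
    rewrite Rmult_1_r.
    assert ((1-s)*(1+C0) < 1).
    { apply (Rmult_lt_reg_r (/(1+C0))); [apply Rinv_0_lt_compat; lra|].
      rewrite Rmult_assoc, Rinv_r by lra. lra. }
    nra.
Qed.

Lemma gl_cont S x0 p : line_ok S x0 -> S p -> forall e, 0 < e ->
  exists U, hnbhs p U /\ forall q, S q -> U q -> Rabs (gl q - gl p) < e.
Proof.
  intros C HS e He.
  destruct p as [[x y]|].
  - destruct (line_fact S x0 x y C HS) as [-> Hy].
    assert (Key : forall v, 0 <= v -> Rabs (v - y) < e -> Rabs (gl (Some (x0,v)) - gl (Some (x0,y))) < e).
    { intros v Hv H. simpl.
      replace (v / (1 + v) - y / (1 + y)) with ((v - y) / ((1+v)*(1+y))) by (field; lra).
      unfold Rdiv. rewrite Rabs_mult, (Rabs_pos_eq (/ _)) by (apply Rlt_le, Rinv_0_lt_compat; nra).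
      assert (/ ((1 + v) * (1 + y)) <= 1).
      { rewrite <- Rinv_1. apply Rinv_le_contravar; nra. }
      pose proof (Rabs_pos (v - y)). nra. }
    destruct (Rlt_dec 0 y) as [Hp|Hp].
    + set (r := Rmin y e). assert (Hr : 0 < r) by (apply Rmin_glb_lt; lra).
      exists (fun q => match q with Some w => Cmod (w - (x0,y)) < r | None => False end).
      split.
      * unfold hnbhs. cbv beta iota delta [Im Re fst snd].
        destruct (Rlt_dec 0 y); [|contradiction].
        exists r. split; [auto|]. split; [apply Rmin_l|]. auto.
      * intros [[u v]|] Hq HU; [|contradiction].
        destruct (line_fact S x0 u v C Hq) as [-> Hv].
        apply Key; auto. rewrite Cmod_vert in HU.
        eapply Rlt_le_trans; [exact HU|apply Rmin_r].
    + assert (y = 0) by lra. subst y.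
      exists (fun q => q = Some (x0,0) \/ exists w, q = Some w /\ 0 < Im w /\ Cmod (w - (x0, e/2)) < e/2).
      split.
      * unfold hnbhs. cbv beta iota delta [Im Re fst snd].
        destruct (Rlt_dec 0 0); [lra|].
        exists (e/2). split; [lra|]. split; [left; auto|].
        intros w Hw Hc. right. exists w. auto.
      * intros q Hq [E|(w & E & Hw & Hc)]; subst q.
        -- unfold Rminus. rewrite Rplus_opp_r, Rabs_R0. auto.
        -- destruct w as [u v]. destruct (line_fact S x0 u v C Hq) as [-> Hv].
           rewrite Cmod_vert in Hc. apply Key; auto. apply Rabs_def2 in Hc.
           rewrite Rminus_0_r, Rabs_pos_eq by lra. lra.
  - exists (fun q => match q with None => True | Some w => 1/e < Im w end).
    split.
    + unfold hnbhs. exists (1/e). split; [apply Rdiv_lt_0_compat; lra|]. split; auto.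
    + intros [[u v]|] Hq HU.
      * simpl in HU |- *.
        assert (Hv : 0 < v) by (assert (0 < 1/e) by (apply Rdiv_lt_0_compat; lra); lra).
        replace (v / (1 + v) - 1) with (- (1/(1+v))) by (field; lra).
        rewrite Rabs_Ropp, Rabs_pos_eq by (apply Rlt_le, Rdiv_lt_0_compat; lra).
        apply (Rmult_lt_reg_r (1+v)); [lra|]. unfold Rdiv. rewrite Rmult_assoc, Rinv_l by lra.
        rewrite Rmult_1_l.
        assert (1 < e * v).
        { apply (Rmult_lt_reg_r (/e)); [apply Rinv_0_lt_compat; lra|].
          replace (e * v * / e) with v by (field; lra). unfold Rdiv in HU. lra. }
        nra.
      * simpl. unfold Rminus. rewrite Rplus_opp_r, Rabs_R0. auto.
Qed.

Lemma geom_line S x0 : line_ok S x0 ->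
  (exists p q : pt, p <> q /\ is_cusp p /\ is_cusp q /\ S p /\ S q /\
     forall r, is_cusp r -> S r -> r = p \/ r = q) /\
  homeomorphic_to_interval S.
Proof.
  intros C. pose proof C as (R0 & H1 & H0 & Hn & HN).
  split.
  - exists (Some (x0,0)), None.
    split; [discriminate|].
    split; [unfold is_cusp; cbv [Im Re fst snd]; auto|].
    split; [simpl; auto|].
    split; [apply H0; auto|]. split; [auto|].
    intros [[x y]|] Hc HS; [|right; auto].
    unfold is_cusp in Hc; cbv [Im Re fst snd] in Hc. destruct Hc as [Hy _]. subst y.
    apply H0 in HS. subst; auto.
  - exists (fl x0), gl. unfold in_unit_interval.
    split; [intros t Ht; apply (fl_S S); auto|].
    split; [intros p Hp; apply (gl_int S x0); auto|].
    split; [intros t Ht; apply gl_fl; auto|].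
    split; [intros p Hp; apply (fl_gl S); auto|].
    split; [intros t Ht U HU; apply (fl_cont S x0 t C Ht U HU)|].
    intros p Hp e He. apply (gl_cont S x0 p C Hp e He).
Qed.
Open Scope R_scope.
Open Scope R_scope.

Lemma reduce (S : pt -> Prop) al be de :
  is_rat al -> is_rat be -> is_rat de -> be*be - 4*al*de = 4 ->
  (forall x y, 0 < y -> (S (Some (x,y)) <-> al*(x*x+y*y) + be*x + de = 0)) ->
  (forall x, S (Some (x,0)) <-> is_rat x /\ al*(x*x) + be*x + de = 0) ->
  (forall x y, y < 0 -> ~ S (Some (x,y))) ->
  (S None <-> al = 0) ->
  (exists p q : pt, p <> q /\ is_cusp p /\ is_cusp q /\ S p /\ S q /\
     forall r, is_cusp r -> S r -> r = p \/ r = q) /\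
  homeomorphic_to_interval S.
Proof.
  intros Ra Rb Rd Hdisc H1 H0 Hn HN.
  destruct (Req_dec al 0) as [Z|Z].
  - subst al. assert (Hb : be <> 0) by (intro; subst; lra).
    apply (geom_line S (- de / be)). split; [|split; [|split; [|split]]].
    + apply is_rat_div; auto. apply is_rat_opp; auto.
    + intros x y Hy. rewrite H1 by auto. split; intros E.
      * apply (Rmult_eq_reg_l be); auto. field_simplify; auto. lra.
      * rewrite E. field. auto.
    + intros x. rewrite H0. split.
      * intros [_ E]. apply (Rmult_eq_reg_l be); auto. field_simplify; auto. lra.
      * intros E. split.
        -- rewrite E. apply is_rat_div; auto. apply is_rat_opp; auto.
        -- rewrite E. field. auto.
    + auto.
    + apply HN; auto.
  - set (u := (-be - 2)/(2*al)). set (v := (-be + 2)/(2*al)).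
    assert (Ru : is_rat u) by (apply is_rat_div; [apply is_rat_minus; [apply is_rat_opp; auto|apply (is_rat_IZR 2)]|apply is_rat_mult; [apply (is_rat_IZR 2)|auto]|apply Rmult_integral_contrapositive; split; [intro; lra|auto]]).
    assert (Rv : is_rat v) by (apply is_rat_div; [apply is_rat_plus; [apply is_rat_opp; auto|apply (is_rat_IZR 2)]|apply is_rat_mult; [apply (is_rat_IZR 2)|auto]|apply Rmult_integral_contrapositive; split; [intro; lra|auto]]).
    assert (Hal4 : 4*al <> 0) by (apply Rmult_integral_contrapositive; split; [intro; lra|auto]).
    assert (Hde : de = (be*be - 4)/(4*al)).
    { apply (Rmult_eq_reg_r (4*al)); [|auto]. unfold Rdiv. rewrite Rmult_assoc, Rinv_l by auto. lra. }
    assert (Id : forall x y, al*(x*x+y*y) + be*x + de = al*((x-u)*(x-v) + y*y)).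
    { intros. unfold u, v. rewrite Hde. field. auto. }
    assert (Hal2 : 2*al <> 0) by (apply Rmult_integral_contrapositive; split; [intro; lra|auto]).
    assert (Huv : u <> v).
    { intro E. assert (E2 : u*(2*al) = v*(2*al)) by (rewrite E; auto).
      unfold u, v, Rdiv in E2. rewrite !Rmult_assoc, Rinv_l in E2 by auto. lra. }
    assert (Gen : forall lo hi, lo < hi -> is_rat lo -> is_rat hi ->
       (forall x, (x-u)*(x-v) = (x-lo)*(x-hi)) -> (forall x, x = u \/ x = v <-> x = lo \/ x = hi) ->
       circ_ok S lo hi).
    { intros lo hi Hlh Rlo Rhi Ep Eq. split; [auto|split; [auto|split; [auto|split; [|split; [|split]]]]].
      - intros x y Hy. rewrite H1, Id by auto. split; intros E.
        + apply Rmult_integral in E. destruct E as [E|E]; [contradiction|]. rewrite Ep in E. lra.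
        + rewrite Ep. replace ((x - lo) * (x - hi) + y * y) with 0 by lra. ring.
      - intros x. rewrite H0. rewrite <- Eq. split.
        + intros [_ E]. replace (al * (x * x) + be * x + de) with (al*((x-u)*(x-v))) in E
            by (rewrite <- (Rplus_0_r (x*x)), <- (Rmult_0_l 0) at 1; rewrite Id; ring).
          apply Rmult_integral in E. destruct E as [E|E]; [contradiction|].
          apply Rmult_integral in E. destruct E; [left|right]; lra.
        + intros E. split; [destruct E; subst; auto|].
          replace (al * (x * x) + be * x + de) with (al*((x-u)*(x-v)))
            by (rewrite <- (Rplus_0_r (x*x)), <- (Rmult_0_l 0) at 1; rewrite Id; ring).
          destruct E as [E|E]; rewrite E; ring.
      - auto.
      - intro HS. apply HN in HS. contradiction. }
    destruct (Rlt_dec u v) as [Hl|Hl].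
    + apply (geom_circle S u v). apply Gen; [auto|auto|auto|intros; ring|intros; tauto].
    + apply (geom_circle S v u). apply Gen; [lra|auto|auto|intros; ring|intros; tauto].
Qed.
Open Scope R_scope.
Open Scope R_scope.

Lemma disc_id p q r s A B C : p*s - q*r = 1 -> A*A+B*C = 1 -> A*(p-s)+C*q+B*r = 0 ->
 (-A*(p+s) + q*C - B*r)*(-A*(p+s) + q*C - B*r) - 4*(p*C - A*r)*(-q*A - B*s) = 4.
Proof. intros. nra. Qed.

Lemma hstar_pos x y : 0 < y -> in_hstar (Some (x,y)).
Proof. intros. right. exists (x,y). split; auto. Qed.
Lemma hstar_zero x : in_hstar (Some (x,0)) <-> is_rat x.
Proof. split.
  - intros [[_ H]|[z [E H]]]; auto. injection E as <-. unfold in_h in H; simpl in H; lra.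
  - intros H. left. split; auto. Qed.
Lemma hstar_neg x y : y < 0 -> ~ in_hstar (Some (x,y)).
Proof. intros Hy [[H _]|[z [E H]]]; simpl in *; [lra|]. injection E as <-. unfold in_h in H; simpl in H; lra. Qed.

Theorem proposition5p3 (G : zmat -> Prop) (J : rmat) (m : zmat) :
  real_congruence_group G J -> G m -> admissible J m ->
  (exists p q : pt, p <> q /\ is_cusp p /\ is_cusp q /\
     C_gamma J m p /\ C_gamma J m q /\
     forall r, is_cusp r -> C_gamma J m r -> r = p \/ r = q) /\
  homeomorphic_to_interval (C_gamma J m).
Proof.
  intros HR Gm Hadm.
  destruct (main_setup G J m HR Gm Hadm) as [Hdet [A [B [C [s [Hs [RA [RB [RC [Ea [Eb [Ec [Ed [HAB T]]]]]]]]]]]]]].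
  assert (EJ : J = MJ s A B C) by (destruct J; simpl in *; subst; reflexivity).
  subst J.
  set (p := IZR (za m)). set (q := IZR (zb m)). set (r := IZR (zc m)). set (s' := IZR (zd m)).
  assert (Em : rmat_of_z m = Mg p q r s') by reflexivity.
  assert (Hg : p*s' - q*r = 1).
  { pose proof (rdet_z m) as E. rewrite Hdet in E. unfold rdet in E. rewrite Em in E. exact E. }
  assert (Rp : is_rat p) by apply is_rat_IZR. assert (Rq : is_rat q) by apply is_rat_IZR.
  assert (Rr : is_rat r) by apply is_rat_IZR. assert (Rs : is_rat s') by apply is_rat_IZR.
  apply (reduce (C_gamma (MJ s A B C) m) (p*C - A*r) (-A*(p+s') + q*C - B*r) (-q*A - B*s')).
  - apply is_rat_minus; apply is_rat_mult; auto.
  - apply is_rat_minus; [apply is_rat_plus|apply is_rat_mult; auto].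
    + apply is_rat_mult; [apply is_rat_opp; auto|apply is_rat_plus; auto].
    + apply is_rat_mult; auto.
  - apply is_rat_minus; apply is_rat_mult; auto. apply is_rat_opp; auto.
  - apply disc_id; auto.
  - intros x y Hy. unfold C_gamma. rewrite Em, <- (key_eq p q r s' A B C s x y Hs Hg HAB T ltac:(lra)).
    split; [tauto|]. intros E. split; [apply hstar_pos; auto|auto].
  - intros x. unfold C_gamma. rewrite Em, hstar_zero, key_real by auto. tauto.
  - intros x y Hy [H _]. exact (hstar_neg x y Hy H).
  - unfold C_gamma. rewrite Em, <- (key_none p q r s' A B C s Hs Hg HAB).
    split; [tauto|]. intros E. split; [left; exact I|auto].
Qed.
Open Scope R_scope.
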